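(* Assume an i.i.d. sample of $(Y,X)$ of size $n$ from the Gaussian functional linear model, and let $[\ell]_j^2=j^{-2s}$ for all $j\ge1$. Then the order of $\mathcal R^\ell_*[(1+\log n)n^{-1}]$ is as follows. (pp) If $\beta_j=j^{2p}$, $\gamma_j=j^{-2a}$ with $p>0$, $a>1/2$, $p+a\ge3/2$ and $s>1/2-p$, then $\mathcal R^\ell_*[(1+\log n)n^{-1}]\asymp (n^{-1}\log n)^{(2p+2s-1)/(2p+2a)}$ if $s-a<1/2$; $\asymp n^{-1}(\log n)^2$ if $s-a=1/2$; $\asymp n^{-1}\log n$ if $s-a>1/2$. (pe) If $\beta_j=j^{2p}$, $\gamma_j=\exp(-j^{2a}+1)$ with $p>0$, $a>0$ and $s>1/2-p$, then $\mathcal R^\ell_*[(1+\log n)n^{-1}]\asymp(\log n)^{-(2p+2s-1)/(2a)}$. (ep) If $\beta_j=\exp(j^{2p}-1)$, $\gamma_j=j^{-2a}$ with $p>0$, $a>1/2$ and $s\in\mathbb R$, then $\mathcal R^\ell_*[(1+\log n)n^{-1}]\asymp n^{-1}(\log n)^{(2p+2a-2s+1)/(2p)}$ if $s-a<1/2$; $\asymp n^{-1}(\log n)(\log\log n)$ if $s-a=1/2$; $\asymp n^{-1}\log n$ if $s-a>1/2$.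
   Context: For strictly positive sequences $\beta,\gamma$ and real numbers $[\ell]_j$, $j\ge1$, define for $m\ge1$ and $x\in(0,1]$ $$\mathcal R^\ell_m[x]:=\max\Big\{\sum_{j>m}\frac{[\ell]_j^2}{\beta_j},\ \max\Big(\frac{\gamma_m}{\beta_m},x\Big)\sum_{j=1}^m\frac{[\ell]_j^2}{\gamma_j}\Big\},\qquad\mathcal R^\ell_*[x]:=\min_{m\ge1}\mathcal R^\ell_m[x].$$ (In the paper $\beta$ describes the ellipsoid $\{h:\sum_j\beta_j\langle h,\psi_j\rangle^2\le r\}$ of slope functions, $\gamma$ the decay of the covariance operator, and $[\ell]_j=\ell(\psi_j)$ the coefficients of the linear functional.) For positive sequences, $x_n\asymp y_n$ means $x_n/y_n$ is bounded away from zero and infinity. *)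

(* Defs.v *)
From Stdlib Require Import Reals Lra.
From Coquelicot Require Import Coquelicot.
Open Scope R_scope.

(* Sequences are functions nat -> R; only indices j >= 1 are used. *)

Fixpoint psum (f : nat -> R) (m : nat) : R :=
  match m with
  | O => 0
  | S m' => psum f m' + f (S m')
  end.

(* tail f m = sum_{j>m} f j  (as a series; convergent in all cases considered) *)
Definition tail (f : nat -> R) (m : nat) : R :=
  Series (fun k => f (m + 1 + k)%nat).

Definition Rm (l beta gamma : nat -> R) (x : R) (m : nat) : R :=
  Rmax (tail (fun j => (l j) ^ 2 / beta j) m)
       (Rmax (gamma m / beta m) x * psum (fun j => (l j) ^ 2 / gamma j) m).

(* R^l_*[x] = min_{m>=1} R^l_m[x], taken as the infimum of the values *)
Definition Rstar (l beta gamma : nat -> R) (x : R) : R :=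
  real (Glb_Rbar (fun y => exists m : nat, (1 <= m)%nat /\ y = Rm l beta gamma x m)).

Definition Rstar_seq (l beta gamma : nat -> R) (n : nat) : R :=
  Rstar l beta gamma ((1 + ln (INR n)) / INR n).

Definition asymp (u v : nat -> R) : Prop :=
  exists c C : R, exists N : nat, 0 < c /\ 0 < C /\
    forall n : nat, (N <= n)%nat -> c * v n <= u n <= C * v n.

(* Main.v *)
Require Import Defs.
From Stdlib Require Import Reals.
From Coquelicot Require Import Coquelicot.
From Stdlib Require Import Lra Lia Psatz.
Open Scope R_scope.

Lemma exp_le_m x y : x <= y -> exp x <= exp y.
Proof. intros [H|H]; [left; apply exp_increasing; auto | subst; lra]. Qed.

Lemma exp_le_inv x y : exp x <= exp y -> x <= y.
Proof. intros H. destruct (Rle_or_lt x y) as [h|h]; auto.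
  apply exp_increasing in h. lra. Qed.

Lemma ln_le_m x y : 0 < x -> x <= y -> ln x <= ln y.
Proof. intros Hx [H|H]; [left; apply ln_increasing; auto | subst; lra]. Qed.

Lemma ln_le_inv x y : 0 < x -> 0 < y -> ln x <= ln y -> x <= y.
Proof. intros Hx Hy H. destruct (Rle_or_lt x y) as [h|h]; auto.
  apply ln_increasing in h; lra. Qed.

Lemma ln_le_sub1 x : 0 < x -> ln x <= x - 1.
Proof. intros Hx. pose proof (exp_ineq1_le (ln x)). rewrite exp_ln in H; lra. Qed.

Lemma ln_ge_inv x : 0 < x -> 1 - / x <= ln x.
Proof. intros Hx. pose proof (ln_le_sub1 (/ x) (Rinv_0_lt_compat _ Hx)).
  rewrite ln_Rinv in H; lra. Qed.

Lemma Rpower_pos x y : 0 < Rpower x y.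
Proof. unfold Rpower; apply exp_pos. Qed.

Lemma Rpower_base1 y : Rpower 1 y = 1.
Proof. unfold Rpower; rewrite ln_1, Rmult_0_r; apply exp_0. Qed.

Lemma Rpower_div x a b : 0 < x -> Rpower x a / Rpower x b = Rpower x (a - b).
Proof. intros. unfold Rpower, Rminus. rewrite Rmult_plus_distr_r, exp_plus.
  unfold Rdiv. rewrite <- exp_Ropp. f_equal. f_equal. ring. Qed.

Lemma Rpower_expo_le x a b : 1 <= x -> a <= b -> Rpower x a <= Rpower x b.
Proof. intros; apply Rle_Rpower; auto. Qed.

Lemma Rpower_base_le x y e : 0 <= e -> 0 < x -> x <= y -> Rpower x e <= Rpower y e.
Proof. intros; apply Rle_Rpower_l; auto. Qed.

Lemma Rpower_base_le_neg x y e : e <= 0 -> 0 < x -> x <= y -> Rpower y e <= Rpower x e.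
Proof. intros He Hx Hxy. unfold Rpower. apply exp_le_m.
  assert (ln x <= ln y) by (apply ln_le_m; auto). nra. Qed.

Lemma Rpower_le1 x e : 1 <= x -> e <= 0 -> Rpower x e <= 1.
Proof. intros. rewrite <- (Rpower_base1 e). apply Rpower_base_le_neg; lra. Qed.

Lemma Rpower_ge1 x e : 1 <= x -> 0 <= e -> 1 <= Rpower x e.
Proof. intros. rewrite <- (Rpower_base1 e). apply Rpower_base_le; lra. Qed.

Lemma Rpower_inv x e : 0 < x -> Rpower (/ x) e = Rpower x (- e).
Proof. intros. unfold Rpower. rewrite ln_Rinv by auto. f_equal; ring. Qed.

Lemma Rpower_sub1 x e : 0 < x -> Rpower x (e - 1) = Rpower x e / x.
Proof. intros. rewrite <- Rpower_div by auto. rewrite Rpower_1; auto. Qed.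

Lemma Rpower_exp x e : Rpower (exp x) e = exp (e * x).
Proof. unfold Rpower; rewrite ln_exp; auto. Qed.

Lemma exp_Rpower_ln x e : 0 < x -> Rpower x e = exp (e * ln x).
Proof. reflexivity. Qed.

Lemma poly_exp b eps : 0 < eps -> exists C, 0 < C /\
  forall y, 1 <= y -> Rpower y b <= C * exp (eps * y).
Proof.
  intros He. destruct (Rle_or_lt b 0) as [Hb|Hb].
  - exists 1. split; [lra|]. intros y Hy.
    assert (exp 0 <= exp (eps * y)) by (apply exp_le_m; nra).
    rewrite exp_0 in H. pose proof (Rpower_le1 y b Hy Hb). lra.
  - exists (exp (b * b / eps)). split; [apply exp_pos|]. intros y Hy.
    rewrite <- exp_plus. unfold Rpower. apply exp_le_m.
    assert (Hs : 0 < sqrt y) by (apply sqrt_lt_R0; lra).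
    assert (Hss := sqrt_sqrt y ltac:(lra)).
    assert (Hl : ln y = 2 * ln (sqrt y)).
    { rewrite <- Hss at 1. rewrite ln_mult by auto. ring. }
    pose proof (ln_le_sub1 (sqrt y) Hs).
    assert (b * ln y <= 2 * b * sqrt y) by nra.
    assert (2 * b * sqrt y <= b * b / eps + eps * y).
    { pose proof (Rle_0_sqr (eps * sqrt y - b)) as Hq. unfold Rsqr in Hq.
      apply Rmult_le_reg_l with eps; auto.
      replace (eps * (b * b / eps + eps * y)) with (b*b + eps*eps*(sqrt y * sqrt y)) by (rewrite Hss; field; lra).
      nra. }
    lra.
Qed.


Lemma psum_ext f g m : (forall j, (1 <= j <= m)%nat -> f j = g j) -> psum f m = psum g m.
Proof. induction m; intros H; simpl; auto.
  rewrite IHm by (intros; apply H; lia). rewrite H by lia. auto. Qed.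

Lemma psum_le f g m : (forall j, (1 <= j <= m)%nat -> f j <= g j) -> psum f m <= psum g m.
Proof. induction m; intros H; simpl; [lra|].
  assert (psum f m <= psum g m) by (apply IHm; intros; apply H; lia).
  assert (f (S m) <= g (S m)) by (apply H; lia). lra. Qed.

Lemma psum_const c m : psum (fun _ => c) m = INR m * c.
Proof. induction m; simpl psum; [simpl; ring|]. rewrite IHm, S_INR; ring. Qed.

Lemma psum_scal c f m : psum (fun j => c * f j) m = c * psum f m.
Proof. induction m; simpl; [ring|]. rewrite IHm; ring. Qed.

Lemma seg_mono f m M : (m <= M)%nat -> (forall j, (m < j <= M)%nat -> 0 <= f j) ->
  psum f m <= psum f M.
Proof. intros Hm. induction Hm; intros H; [lra|]. simpl.
  assert (psum f m <= psum f m0) by (apply IHHm; intros; apply H; lia).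
  assert (0 <= f (S m0)) by (apply H; lia). lra. Qed.

Lemma psum_nonneg f m : (forall j, (1 <= j <= m)%nat -> 0 <= f j) -> 0 <= psum f m.
Proof. intros H. change 0 with (psum f 0). apply seg_mono; [lia|]. intros; apply H; lia. Qed.

Lemma seg_tele f F m M : (m <= M)%nat ->
  (forall j, (m < j <= M)%nat -> f j <= F j - F (pred j)) ->
  psum f M - psum f m <= F M - F m.
Proof. intros Hm. induction Hm; intros H; [lra|]. simpl psum.
  assert (psum f m0 - psum f m <= F m0 - F m) by (apply IHHm; intros; apply H; lia).
  assert (f (S m0) <= F (S m0) - F (pred (S m0))) by (apply H; lia).
  simpl pred in H1. lra. Qed.

Lemma seg_tele_ge f F m M : (m <= M)%nat ->
  (forall j, (m < j <= M)%nat -> F j - F (pred j) <= f j) ->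
  F M - F m <= psum f M - psum f m.
Proof. intros Hm. induction Hm; intros H; [lra|]. simpl psum.
  assert (F m0 - F m <= psum f m0 - psum f m) by (apply IHHm; intros; apply H; lia).
  assert (F (S m0) - F (pred (S m0)) <= f (S m0)) by (apply H; lia).
  simpl pred in H1. lra. Qed.

Lemma seg_const_ge f c m M : (m <= M)%nat -> (forall j, (m < j <= M)%nat -> c <= f j) ->
  INR (M - m) * c <= psum f M - psum f m.
Proof. intros Hm. induction Hm; intros H; [rewrite Nat.sub_diag; simpl; lra|]. simpl psum.
  assert (INR (m0 - m) * c <= psum f m0 - psum f m) by (apply IHHm; intros; apply H; lia).
  assert (c <= f (S m0)) by (apply H; lia).
  replace (S m0 - m)%nat with (S (m0 - m)) by lia. rewrite S_INR. lra. Qed.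

Lemma aux_eq1 (a b : R) : b + a - b = a. Proof. ring. Qed.
Lemma aux_eq2 (a b c : R) : a - b + c = a + c - b. Proof. ring. Qed.

Lemma sum_n_shift f m N : sum_n (fun k => f (m + 1 + k)%nat) N = psum f (m + 1 + N) - psum f m.
Proof. induction N.
  - rewrite sum_O. replace (m + 1 + 0)%nat with (S m) by lia. exact (eq_sym (aux_eq1 (f (S m)) (psum f m))).
  - rewrite sum_Sn, IHN. replace (m + 1 + S N)%nat with (S (m + 1 + N)) by lia. simpl psum.
    exact (aux_eq2 (psum f (m + 1 + N)) (psum f m) (f (S (m + 1 + N)))). Qed.

Lemma tail_facts f m B : (forall j, (m < j)%nat -> 0 <= f j) ->
  (forall M, (m <= M)%nat -> psum f M - psum f m <= B) ->
  tail f m <= B /\ forall M, (m <= M)%nat -> psum f M - psum f m <= tail f m.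
Proof.
  intros Hpos HB. set (u := sum_n (fun k => f (m + 1 + k)%nat)).
  assert (Hinc : forall N, u N <= u (S N)).
  { intros N. unfold u. rewrite !sum_n_shift. replace (m + 1 + S N)%nat with (S (m + 1 + N)) by lia.
    simpl psum. assert (0 <= f (S (m + 1 + N))) by (apply Hpos; lia). lra. }
  assert (Hbd : forall N, u N <= B).
  { intros N. unfold u. rewrite sum_n_shift. apply HB; lia. }
  assert (Hex : ex_finite_lim_seq u) by (apply (ex_finite_lim_seq_incr u B); auto).
  destruct Hex as [l Hl].
  assert (Ht : tail f m = l).
  { unfold tail, Series. fold u. rewrite (is_lim_seq_unique u l Hl). reflexivity. }
  rewrite Ht. split.
  - assert (Hc : is_lim_seq (fun _ : nat => B) B) by apply is_lim_seq_const.
    pose proof (is_lim_seq_le u (fun _ => B) l B Hbd Hl Hc). simpl in H. auto.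
  - intros M HM. pose proof (is_lim_seq_incr_compare u l Hl Hinc (M - m)%nat).
    unfold u in H. rewrite sum_n_shift in H.
    destruct (Nat.eq_dec M m) as [e|e].
    + subst. assert (0 <= psum f (m + 1 + (m - m)) - psum f m).
      { assert (psum f m <= psum f (m + 1 + (m - m))) by (apply seg_mono; [lia|intros; apply Hpos; lia]). lra. }
      lra.
    + assert (psum f M <= psum f (m + 1 + (M - m))) by (apply seg_mono; [lia|intros; apply Hpos; lia]). lra.
Qed.

Lemma tail_ext f g m : (forall j, (m < j)%nat -> f j = g j) -> tail f m = tail g m.
Proof. intros H. unfold tail. apply Series_ext.
  intros k. apply H. lia. Qed.


Lemma Rstar_ge l be ga x b : (forall m, (1 <= m)%nat -> b <= Rm l be ga x m) ->
  b <= Rstar l be ga x.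
Proof.
  intros H. unfold Rstar.
  set (E := fun y => exists m : nat, (1 <= m)%nat /\ y = Rm l be ga x m).
  destruct (Glb_Rbar_correct E) as [Hlb Hgl].
  assert (H1 : Rbar_le (Glb_Rbar E) (Rm l be ga x 1)).
  { apply Hlb. exists 1%nat; split; auto. }
  assert (H2 : Rbar_le b (Glb_Rbar E)).
  { apply Hgl. intros y [m [Hm ->]]. simpl. apply H; auto. }
  destruct (Glb_Rbar E); simpl in *; tauto.
Qed.

Lemma Rstar_le l be ga x m0 : (forall m, (1 <= m)%nat -> 0 <= Rm l be ga x m) ->
  (1 <= m0)%nat -> Rstar l be ga x <= Rm l be ga x m0.
Proof.
  intros H Hm0. unfold Rstar.
  set (E := fun y => exists m : nat, (1 <= m)%nat /\ y = Rm l be ga x m).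
  destruct (Glb_Rbar_correct E) as [Hlb Hgl].
  assert (H1 : Rbar_le (Glb_Rbar E) (Rm l be ga x m0)).
  { apply Hlb. exists m0; split; auto. }
  assert (H2 : Rbar_le 0 (Glb_Rbar E)).
  { apply Hgl. intros y [m [Hm ->]]. simpl. apply H; auto. }
  destruct (Glb_Rbar E); simpl in *; try tauto; pose proof (H m0 Hm0); lra.
Qed.

Lemma Rm_eq l be ga x m u w :
  (forall j, (1 <= j)%nat -> (l j) ^ 2 / be j = u j) ->
  (forall j, (1 <= j)%nat -> (l j) ^ 2 / ga j = w j) ->
  Rm l be ga x m = Rmax (tail u m) (Rmax (ga m / be m) x * psum w m).
Proof.
  intros Hu Hw. unfold Rm. f_equal.
  - apply tail_ext. intros; apply Hu; lia.
  - f_equal. apply psum_ext. intros; apply Hw; lia.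
Qed.

Lemma form_ge_T T g x S : T <= Rmax T (Rmax g x * S).
Proof. apply Rmax_l. Qed.

Lemma form_ge_xS T g x S : 0 <= S -> x * S <= Rmax T (Rmax g x * S).
Proof. intros HS. eapply Rle_trans; [|apply Rmax_r].
  apply Rmult_le_compat_r; auto. apply Rmax_r. Qed.

Lemma form_nonneg T g x S : 0 <= x -> 0 <= S -> 0 <= Rmax T (Rmax g x * S).
Proof. intros. eapply Rle_trans; [|apply form_ge_xS]; auto. nra. Qed.

Lemma form_le T g x S B : T <= B -> 0 <= S -> Rmax g x * S <= B -> Rmax T (Rmax g x * S) <= B.
Proof. intros. apply Rmax_lub; auto. Qed.

Lemma form_le2 T g x S B y : T <= B -> 0 <= S -> g <= y -> x <= y -> y * S <= B ->
  Rmax T (Rmax g x * S) <= B.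
Proof. intros. apply Rmax_lub; auto. eapply Rle_trans; [|eauto].
  apply Rmult_le_compat_r; auto. apply Rmax_lub; auto. Qed.

Lemma floor_ex z : 0 <= z -> exists k : nat, INR k <= z < INR k + 1.
Proof.
  intros Hz. destruct (INR_unbounded z) as [n Hn].
  induction n.
  - simpl in Hn. lra.
  - rewrite S_INR in Hn. destruct (Rlt_or_le z (INR n)) as [h|h].
    + apply IHn; lra.
    + exists n; lra.
Qed.

Lemma ceil_ex z : 1 <= z -> exists m : nat, (1 <= m)%nat /\ z <= INR m <= 2 * z.
Proof.
  intros Hz. destruct (floor_ex z) as [k Hk]; [lra|].
  destruct (Req_dec (INR k) z) as [e|e].
  - exists k. split; [|lra]. destruct k; simpl in e; [lra|lia].
  - exists (S k). rewrite S_INR. split; [lia|].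
    assert (INR k < z) by lra. split; [lra|]. pose proof (pos_INR k). lra.
Qed.

Lemma floor1_ex z : 1 <= z -> exists m : nat, (1 <= m)%nat /\ z / 2 <= INR m <= z.
Proof.
  intros Hz. destruct (floor_ex z) as [k Hk]; [lra|].
  exists k. destruct k.
  - simpl in Hk. lra.
  - split; [lia|]. rewrite S_INR in *. pose proof (pos_INR k). lra.
Qed.

Lemma eventually_ln K : exists N : nat, (1 <= N)%nat /\ forall n, (N <= n)%nat -> K <= ln (INR n).
Proof.
  destruct (INR_unbounded (exp K)) as [N HN]. exists (S N). split; [lia|].
  intros n Hn. assert (INR N <= INR n) by (apply le_INR; lia).
  rewrite <- (ln_exp K). apply ln_le_m; [apply exp_pos|lra].
Qed.

Lemma INR_ge1 j : (1 <= j)%nat -> 1 <= INR j.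
Proof. intros; change 1 with (INR 1); apply le_INR; auto. Qed.


Lemma D_bounds y : 1 < y -> - / (y - 1) <= ln (y - 1) - ln y <= - / y.
Proof.
  intros Hy. assert (E : ln (y - 1) - ln y = ln ((y - 1) / y)).
  { unfold Rdiv. rewrite ln_mult, ln_Rinv by (try apply Rinv_0_lt_compat; lra). ring. }
  rewrite E. assert (Hp : 0 < (y - 1) / y) by (apply Rdiv_lt_0_compat; lra).
  split.
  - pose proof (ln_ge_inv _ Hp). replace (/ ((y - 1) / y)) with (y / (y - 1)) in H by (field; lra).
    replace (- / (y - 1)) with (1 - y / (y - 1)) by (field; lra). lra.
  - pose proof (ln_le_sub1 _ Hp). replace ((y - 1) / y - 1) with (- / y) in H by (field; lra). lra.
Qed.

Lemma Rpower_shift y e : 1 < y -> Rpower (y - 1) e = Rpower y e * exp (e * (ln (y - 1) - ln y)).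
Proof. intros. unfold Rpower. rewrite <- exp_plus. f_equal. ring. Qed.

Lemma tele_neg y q : 2 <= y -> 1 < q ->
  Rpower y (- q) <= (Rpower (y - 1) (1 - q) - Rpower y (1 - q)) / (q - 1).
Proof.
  intros Hy Hq. rewrite Rpower_shift by lra.
  destruct (D_bounds y ltac:(lra)) as [_ HD].
  set (D := ln (y - 1) - ln y) in *.
  pose proof (exp_ineq1_le ((1 - q) * D)).
  assert (H2 : (q - 1) / y <= (1 - q) * D).
  { assert ((1 - q) * D >= (1 - q) * (- / y)) by nra. unfold Rdiv. lra. }
  assert (Hr : Rpower y (- q) = Rpower y (1 - q) / y).
  { rewrite <- Rpower_sub1 by lra. f_equal; ring. }
  rewrite Hr. pose proof (Rpower_pos y (1 - q)).
  apply Rmult_le_reg_r with (q - 1); [lra|]. unfold Rdiv at 2. rewrite Rmult_assoc, Rinv_l, Rmult_1_r by lra.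
  assert (Rpower y (1-q) * (1 + (q - 1) / y) <= Rpower y (1 - q) * exp ((1 - q) * D)) by (apply Rmult_le_compat_l; lra).
  replace (Rpower y (1 - q) / y * (q - 1)) with (Rpower y (1 - q) * ((q - 1) / y)) by (field; lra).
  lra.
Qed.

Lemma tele_pos_up y al : 2 <= y -> 0 < al <= 1 ->
  al / 2 * Rpower y (al - 1) <= Rpower y al - Rpower (y - 1) al.
Proof.
  intros Hy Hal. rewrite Rpower_shift by lra.
  destruct (D_bounds y ltac:(lra)) as [_ HD].
  set (D := ln (y - 1) - ln y) in *.
  assert (H1 : exp (al * D) <= exp (- (al / y))) by (apply exp_le_m; unfold Rdiv; nra).
  rewrite exp_Ropp in H1. pose proof (exp_ineq1_le (al / y)).
  assert (Ht : 0 < al / y <= 1) by (split; [apply Rdiv_lt_0_compat; lra| apply Rmult_le_reg_r with y; [lra|]; unfold Rdiv; rewrite Rmult_assoc, Rinv_l by lra; lra]).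
  assert (H3 : / exp (al / y) <= 1 - al / y / 2).
  { apply Rmult_le_reg_r with (exp (al / y)); [apply exp_pos|]. rewrite Rinv_l by (apply Rgt_not_eq, exp_pos).
    assert (1 <= (1 - al / y / 2) * (1 + al / y)) by nra.
    apply Rle_trans with ((1 - al / y / 2) * (1 + al / y)); auto. apply Rmult_le_compat_l; lra. }
  rewrite Rpower_sub1 by lra. pose proof (Rpower_pos y al).
  assert (Rpower y al * exp (al * D) <= Rpower y al * (1 - al / y / 2)) by (apply Rmult_le_compat_l; lra).
  replace (al / 2 * (Rpower y al / y)) with (Rpower y al * (al / y / 2)) by (field; lra). lra.
Qed.

Lemma tele_pos_low y al : 2 <= y -> 0 < al ->
  Rpower y al - Rpower (y - 1) al <= 2 * al * Rpower y (al - 1).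
Proof.
  intros Hy Hal. rewrite Rpower_shift by lra.
  destruct (D_bounds y ltac:(lra)) as [HD _].
  set (D := ln (y - 1) - ln y) in *.
  pose proof (exp_ineq1_le (al * D)).
  assert (H2 : - (2 * al / y) <= al * D).
  { assert (/ (y - 1) <= 2 / y).
    { apply Rmult_le_reg_r with (y * (y - 1)); [nra|]. field_simplify; lra. }
    unfold Rdiv in *. nra. }
  rewrite Rpower_sub1 by lra. pose proof (Rpower_pos y al).
  assert (Rpower y al * (1 - 2 * al / y) <= Rpower y al * exp (al * D)) by (apply Rmult_le_compat_l; lra).
  replace (2 * al * (Rpower y al / y)) with (Rpower y al * (2 * al / y)) by (field; lra). lra.
Qed.

Lemma tele_log_up y : 2 <= y -> / y <= ln y - ln (y - 1).
Proof. intros Hy. destruct (D_bounds y ltac:(lra)). lra. Qed.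

Lemma tele_log_low y : 1 <= y -> ln (y + 1) - ln y <= / y.
Proof. intros Hy. pose proof (D_bounds (y + 1) ltac:(lra)) as [H _].
  replace (y + 1 - 1) with y in H by ring. lra. Qed.


Definition pw (r : R) (j : nat) : R := Rpower (INR j) r.

Lemma pw_pos r j : 0 < pw r j.
Proof. apply Rpower_pos. Qed.

Lemma pw_1 r : pw r 1 = 1.
Proof. unfold pw. simpl INR. apply Rpower_base1. Qed.

Lemma psum_1 f : psum f 1 = f 1%nat.
Proof. simpl. ring. Qed.

Lemma INR_pred j : (1 <= j)%nat -> INR (pred j) = INR j - 1.
Proof. intros; destruct j; [lia|]. simpl pred. rewrite S_INR; ring. Qed.

Lemma INR_ge2 j : (1 < j)%nat -> 2 <= INR j.
Proof. intros; change 2 with (INR 2); apply le_INR; lia. Qed.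

Lemma Rpower_mul_self y e : 0 < y -> y * Rpower y e = Rpower y (e + 1).
Proof. intros. rewrite Rpower_plus, Rpower_1 by auto. ring. Qed.

Lemma sum_low r : -1 < r -> exists c, 0 < c /\ forall m, (1 <= m)%nat ->
  c * Rpower (INR m) (r + 1) <= psum (pw r) m.
Proof.
  intros Hr. set (al := r + 1). assert (Hal : 0 < al) by (unfold al; lra).
  exists (Rmin 1 (/ (2 * al))). split; [apply Rmin_pos; [lra|apply Rinv_0_lt_compat; lra]|].
  intros m Hm.
  assert (H := seg_tele_ge (pw r) (fun j => Rpower (INR j) al / (2 * al)) 1 m Hm).
  assert (H' : forall j, (1 < j <= m)%nat -> Rpower (INR j) al / (2 * al) - Rpower (INR (pred j)) al / (2 * al) <= pw r j).
  { intros j Hj. rewrite INR_pred by lia. pose proof (tele_pos_low (INR j) al (INR_ge2 j ltac:(lia)) Hal).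
    unfold pw. replace (al - 1) with r in H0 by (unfold al; ring).
    apply Rmult_le_reg_r with (2 * al); [lra|]. field_simplify; lra. }
  specialize (H H'). rewrite psum_1, pw_1 in H. simpl INR in H. rewrite Rpower_base1 in H.
  set (Y := Rpower (INR m) al) in *. assert (HY : 1 <= Y) by (apply Rpower_ge1; [apply INR_ge1|]; lia || lra).
  set (k := / (2 * al)) in *. assert (Hk : 0 < k) by (unfold k; apply Rinv_0_lt_compat; lra).
  assert (Y / (2 * al) = Y * k) by (unfold k; field; lra).
  assert (1 / (2 * al) = k) by (unfold k; field; lra).
  destruct (Rle_or_lt 1 k).
  - rewrite Rmin_left by lra. nra.
  - rewrite Rmin_right by lra. nra.
Qed.

Lemma sum_up r : -1 < r -> exists C, 0 < C /\ forall m, (1 <= m)%nat ->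
  psum (pw r) m <= C * Rpower (INR m) (r + 1).
Proof.
  intros Hr. destruct (Rle_or_lt 0 r) as [H0|H0].
  - exists 1. split; [lra|]. intros m Hm.
    apply Rle_trans with (psum (fun _ => Rpower (INR m) r) m).
    + apply psum_le. intros j Hj. unfold pw. apply Rpower_base_le; auto.
      assert (1 <= INR j) by (apply INR_ge1; lia); lra. apply le_INR; lia.
    + rewrite psum_const, Rpower_mul_self; [lra|]. apply INR_ge1 in Hm; lra.
  - set (al := r + 1). assert (Hal : 0 < al <= 1) by (unfold al; lra).
    assert (Hi : 0 < 2 / al) by (apply Rdiv_lt_0_compat; lra).
    exists (1 + 2 / al). split; [lra|].
    intros m Hm.
    assert (H := seg_tele (pw r) (fun j => 2 / al * Rpower (INR j) al) 1 m Hm).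
    assert (H' : forall j, (1 < j <= m)%nat -> pw r j <= 2 / al * Rpower (INR j) al - 2 / al * Rpower (INR (pred j)) al).
    { intros j Hj. rewrite INR_pred by lia. pose proof (tele_pos_up (INR j) al (INR_ge2 j ltac:(lia)) Hal) as Ht.
      unfold pw. replace (al - 1) with r in Ht by (unfold al; ring).
      rewrite <- Rmult_minus_distr_l. replace (Rpower (INR j) r) with (2 / al * (al / 2 * Rpower (INR j) r)) by (field; lra).
      apply Rmult_le_compat_l; [apply Rlt_le; exact Hi|]. lra. }
    specialize (H H'). rewrite psum_1, pw_1 in H. simpl INR in H. rewrite Rpower_base1 in H.
    set (Y := Rpower (INR m) al) in *. assert (HY : 1 <= Y) by (apply Rpower_ge1; [apply INR_ge1|]; lia || lra).
    nra.
Qed.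

Lemma Rpower_m1 y : 0 < y -> Rpower y (-1) = / y.
Proof. intros. unfold Rpower. replace (-1 * ln y) with (- ln y) by ring. rewrite exp_Ropp, exp_ln; auto. Qed.

Lemma sum_log_up m : (1 <= m)%nat -> psum (pw (-1)) m <= 1 + ln (INR m).
Proof.
  intros Hm. assert (H := seg_tele (pw (-1)) (fun j => ln (INR j)) 1 m Hm).
  assert (H' : forall j, (1 < j <= m)%nat -> pw (-1) j <= ln (INR j) - ln (INR (pred j))).
  { intros j Hj. rewrite INR_pred by lia. unfold pw. rewrite Rpower_m1 by (assert (2 <= INR j) by (apply INR_ge2; lia); lra).
    apply tele_log_up. apply INR_ge2; lia. }
  specialize (H H'). rewrite psum_1, pw_1 in H. simpl INR in H. rewrite ln_1 in H. lra.
Qed.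

Lemma sum_log_low m : (1 <= m)%nat -> ln (INR m + 1) <= psum (pw (-1)) m.
Proof.
  intros Hm. assert (H := seg_tele_ge (pw (-1)) (fun j => ln (INR j + 1)) 0 m ltac:(lia)).
  assert (H' : forall j, (0 < j <= m)%nat -> ln (INR j + 1) - ln (INR (pred j) + 1) <= pw (-1) j).
  { intros j Hj. rewrite INR_pred by lia. replace (INR j - 1 + 1) with (INR j) by ring.
    unfold pw. rewrite Rpower_m1 by (assert (1 <= INR j) by (apply INR_ge1; lia); lra).
    apply tele_log_low. apply INR_ge1; lia. }
  specialize (H H'). cbv beta in H. simpl INR in H. simpl psum in H. replace (0 + 1) with 1 in H by ring. rewrite ln_1 in H. lra.
Qed.

Lemma seg_neg q m M : 1 < q -> (1 <= m <= M)%nat ->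
  psum (pw (- q)) M - psum (pw (- q)) m <= Rpower (INR m) (1 - q) / (q - 1).
Proof.
  intros Hq Hm. assert (H := seg_tele (pw (-q)) (fun j => - Rpower (INR j) (1 - q) / (q - 1)) m M ltac:(lia)).
  assert (H' : forall j, (m < j <= M)%nat -> pw (-q) j <= - Rpower (INR j) (1 - q) / (q - 1) - - Rpower (INR (pred j)) (1 - q) / (q - 1)).
  { intros j Hj. rewrite INR_pred by lia. pose proof (tele_neg (INR j) q (INR_ge2 j ltac:(lia)) Hq).
    unfold pw. replace (- Rpower (INR j) (1 - q) / (q - 1) - - Rpower (INR j - 1) (1 - q) / (q - 1))
      with ((Rpower (INR j - 1) (1 - q) - Rpower (INR j) (1 - q)) / (q - 1)) by (field; lra). auto. }
  specialize (H H'). pose proof (Rpower_pos (INR M) (1 - q)).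
  assert (0 < / (q - 1)) by (apply Rinv_0_lt_compat; lra). unfold Rdiv in *. nra.
Qed.

Lemma sum_neg_up r m : r < -1 -> (1 <= m)%nat -> psum (pw r) m <= 1 + / (- r - 1).
Proof.
  intros Hr Hm. pose proof (seg_neg (- r) 1 m ltac:(lra) ltac:(lia)).
  rewrite Ropp_involutive, psum_1, pw_1 in H. simpl INR in H. rewrite Rpower_base1 in H. unfold Rdiv in H. lra.
Qed.

Lemma tail_neg q m : 1 < q -> (1 <= m)%nat ->
  Rpower 2 (- q) * Rpower (INR m) (1 - q) <= tail (pw (- q)) m /\
  tail (pw (- q)) m <= Rpower (INR m) (1 - q) / (q - 1).
Proof.
  intros Hq Hm. destruct (tail_facts (pw (-q)) m (Rpower (INR m) (1 - q) / (q - 1))) as [H1 H2].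
  - intros; left; apply pw_pos.
  - intros M HM. apply seg_neg; auto.
  - split; auto. eapply Rle_trans; [|apply (H2 (2 * m)%nat); lia].
    eapply Rle_trans; [|apply (seg_const_ge _ (Rpower (INR (2 * m)) (- q))); [lia|]].
    + replace (2 * m - m)%nat with m by lia. rewrite mult_INR. simpl (INR 2).
      rewrite <- Rpower_mult_distr by (try apply INR_ge1 in Hm; lra).
      replace (1 - q) with (- q + 1) by ring. rewrite <- Rpower_mul_self by (apply INR_ge1 in Hm; lra).
      replace (1 + 1) with 2 by ring. right; ring.
    + intros j Hj. unfold pw. apply Rpower_base_le_neg; [lra| |apply le_INR; lia].
      assert (1 <= INR j) by (apply INR_ge1; lia); lra.
Qed.


Definition Fpp q r x m := Rmax (tail (pw (- q)) m) (Rmax (Rpower (INR m) (- (q + r))) x * psum (pw r) m).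

Lemma psum_pw_nonneg r m : 0 <= psum (pw r) m.
Proof. apply psum_nonneg; intros; left; apply pw_pos. Qed.

Lemma tail_pw_nonneg q m : 1 < q -> (1 <= m)%nat -> 0 <= tail (pw (- q)) m.
Proof. intros. destruct (tail_neg q m H H0). pose proof (Rpower_pos 2 (- q)). pose proof (Rpower_pos (INR m) (1 - q)). nra. Qed.

Lemma pp1_core q r : 1 < q -> -1 < r -> exists c C, 0 < c /\ 0 < C /\ forall x, 0 < x <= 1 ->
  (forall m, (1 <= m)%nat -> c * Rpower x ((q - 1) / (q + r)) <= Fpp q r x m) /\
  exists m0, (1 <= m0)%nat /\ Fpp q r x m0 <= C * Rpower x ((q - 1) / (q + r)).
Proof.
  intros Hq Hr. destruct (sum_low r Hr) as [cS [HcS Hlow]]. destruct (sum_up r Hr) as [CS [HCS Hup]].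
  set (d := q + r). assert (Hd : 0 < d) by (unfold d; lra).
  set (e := (q - 1) / d).
  exists (Rmin (Rpower 2 (- q)) cS), (/ (q - 1) + CS * Rpower 2 (r + 1)).
  split; [apply Rmin_pos; auto; apply Rpower_pos|].
  split; [assert (0 < / (q - 1)) by (apply Rinv_0_lt_compat; lra); pose proof (Rpower_pos 2 (r + 1)); nra|].
  intros x Hx.
  assert (Hxe : x = Rpower x 1) by (rewrite Rpower_1; lra).
  assert (He1 : Rpower x e = x * Rpower x (- ((r + 1) / d))).
  { rewrite Hxe at 2. rewrite <- Rpower_plus. f_equal. unfold e, d. field. lra. }
  split.
  - intros m Hm. set (M := INR m). assert (HM : 1 <= M) by (apply INR_ge1; auto).
    unfold Fpp. fold d. pose proof (Rpower_pos x e).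
    destruct (Rle_or_lt (Rpower M d) (/ x)) as [Hc|Hc].
    + eapply Rle_trans; [|apply form_ge_T].
      destruct (tail_neg q m Hq Hm) as [HT _]. fold M in HT.
      eapply Rle_trans; [|apply HT].
      assert (E : Rpower M (1 - q) = Rpower (Rpower M d) ((1 - q) / d)).
      { rewrite Rpower_mult. f_equal. field. lra. }
      assert (Rpower x e <= Rpower M (1 - q)).
      { rewrite E. replace e with (- ((1 - q) / d)) by (unfold e; field; lra). rewrite <- Rpower_inv by lra.
        apply Rpower_base_le_neg; [unfold Rdiv; assert (0 < / d) by (apply Rinv_0_lt_compat; lra); nra|apply Rpower_pos|auto]. }
      pose proof (Rmin_l (Rpower 2 (- q)) cS). pose proof (Rpower_pos 2 (- q)).
      apply Rmult_le_compat; try lra. apply Rlt_le, Rmin_pos; auto.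
    + eapply Rle_trans; [|apply form_ge_xS, psum_pw_nonneg].
      specialize (Hlow m Hm). fold M in Hlow.
      assert (E : Rpower M (r + 1) = Rpower (Rpower M d) ((r + 1) / d)).
      { rewrite Rpower_mult. f_equal. field. lra. }
      assert (Rpower x (- ((r + 1) / d)) <= Rpower M (r + 1)).
      { rewrite E. rewrite <- Rpower_inv by lra.
        apply Rpower_base_le; [unfold Rdiv; assert (0 < / d) by (apply Rinv_0_lt_compat; lra); nra|apply Rinv_0_lt_compat; lra|lra]. }
      rewrite He1. pose proof (Rmin_r (Rpower 2 (- q)) cS). pose proof (Rpower_pos x (- ((r + 1) / d))).
      pose proof (Rpower_pos M (r + 1)).
      assert (Rmin (Rpower 2 (- q)) cS * Rpower x (- ((r + 1) / d)) <= cS * Rpower M (r + 1)).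
      { apply Rmult_le_compat; try lra. apply Rlt_le, Rmin_pos; auto. apply Rpower_pos. }
      nra.
  - set (z := Rpower x (- / d)).
    assert (Hz : 1 <= z).
    { unfold z. rewrite <- Rpower_inv by lra. apply Rpower_ge1.
      rewrite <- Rinv_1. apply Rinv_le_contravar; lra. left; apply Rinv_0_lt_compat; lra. }
    destruct (ceil_ex z Hz) as [m0 [Hm0 Hzm]]. exists m0. split; auto.
    set (M := INR m0) in *.
    unfold Fpp. fold d. fold M. apply form_le2 with (y := x).
    + destruct (tail_neg q m0 Hq Hm0) as [_ HT]. fold M in HT. eapply Rle_trans; [apply HT|].
      assert (Rpower M (1 - q) <= Rpower z (1 - q)) by (apply Rpower_base_le_neg; lra).
      assert (Rpower z (1 - q) = Rpower x e).
      { unfold z. rewrite Rpower_mult. f_equal. unfold e. field. lra. }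
      assert (0 < / (q - 1)) by (apply Rinv_0_lt_compat; lra).
      pose proof (Rpower_pos x e). pose proof (Rpower_pos 2 (r + 1)).
      assert (Rpower M (1 - q) * / (q - 1) <= Rpower x e * / (q - 1)) by (apply Rmult_le_compat_r; lra).
      assert (0 <= CS * Rpower 2 (r + 1) * Rpower x e) by (apply Rmult_le_pos; [apply Rmult_le_pos|]; lra).
      unfold Rdiv. nra.
    + apply psum_pw_nonneg.
    + assert (Rpower M (- d) <= Rpower z (- d)) by (apply Rpower_base_le_neg; lra).
      assert (Rpower z (- d) = x) by (unfold z; rewrite Rpower_mult; rewrite Hxe at 2; f_equal; field; lra).
      lra.
    + lra.
    + specialize (Hup m0 Hm0). fold M in Hup.
      assert (Rpower M (r + 1) <= Rpower (2 * z) (r + 1)) by (apply Rpower_base_le; lra).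
      rewrite <- Rpower_mult_distr in H by lra.
      assert (x * Rpower z (r + 1) = Rpower x e).
      { rewrite He1. f_equal. unfold z. rewrite Rpower_mult. f_equal. field. lra. }
      pose proof (Rpower_pos 2 (r + 1)). pose proof (Rpower_pos z (r + 1)). pose proof (Rpower_pos x e).
      assert (0 < / (q - 1)) by (apply Rinv_0_lt_compat; lra).
      assert (x * psum (pw r) m0 <= x * (CS * (Rpower 2 (r + 1) * Rpower z (r + 1)))).
      { apply Rmult_le_compat_l; [lra|]. eapply Rle_trans; [apply Hup|]. apply Rmult_le_compat_l; lra. }
      nra.
Qed.


Definition X L := (1 + L) / exp L.

Lemma X_facts L : 1 <= L -> 0 < X L <= 1 /\ L / exp L <= X L <= 2 * L / exp L /\ / exp L <= X L.
Proof.
  intros HL. pose proof (exp_pos L). pose proof (exp_ineq1_le L). unfold X.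
  assert (0 < / exp L) by (apply Rinv_0_lt_compat; lra).
  unfold Rdiv. repeat split; try nra.
  apply Rmult_le_reg_r with (exp L); auto. rewrite Rmult_assoc, Rinv_l by lra. lra.
Qed.

Lemma ln2_le1 : ln 2 <= 1.
Proof. rewrite <- (ln_exp 1). apply ln_le_m; [lra|]. pose proof (exp_ineq1_le 1). lra. Qed.

Lemma sq_exp : exists C, 0 < C /\ forall L, 1 <= L -> L ^ 2 <= C * exp (L / 2).
Proof.
  destruct (poly_exp 2 (/ 2) ltac:(lra)) as [C [HC H]]. exists C; split; auto.
  intros L HL. specialize (H L HL). replace 2 with (INR 2) in H at 1 by (simpl; ring).
  rewrite Rpower_pow in H by lra. replace (/ 2 * L) with (L / 2) in H by field. auto.
Qed.

Lemma exp_half L : exp (L / 2) / exp L = exp (- (L / 2)).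
Proof. replace L with (L / 2 + L / 2) at 2 by field. rewrite exp_plus, exp_Ropp. field.
  apply Rgt_not_eq, exp_pos. Qed.

Lemma pp2_core q : 1 < q -> exists c C, 0 < c /\ 0 < C /\ forall L, 1 <= L ->
  (forall m, (1 <= m)%nat -> c * (L ^ 2 / exp L) <= Fpp q (-1) (X L) m) /\
  exists m0, (1 <= m0)%nat /\ Fpp q (-1) (X L) m0 <= C * (L ^ 2 / exp L).
Proof.
  intros Hq. set (d := q - 1). assert (Hd : 0 < d) by (unfold d; lra).
  destruct sq_exp as [Cp [HCp Hsq]].
  exists (Rmin (Rpower 2 (- q) / Cp) (/ (2 * d))), (/ (q - 1) + 2 * (2 + / d)).
  assert (Hid : 0 < / d) by (apply Rinv_0_lt_compat; lra).
  split; [apply Rmin_pos; [apply Rdiv_lt_0_compat; [apply Rpower_pos|lra]|apply Rinv_0_lt_compat; lra]|].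
  split; [assert (0 < / (q - 1)) by (apply Rinv_0_lt_compat; lra); lra|].
  intros L HL. destruct (X_facts L HL) as [[Hx0 Hx1] [[HxL HxU] Hxi]].
  pose proof (exp_pos L) as HeL.
  assert (Hqr : - (q + -1) = - d) by (unfold d; ring).
  split.
  - intros m Hm. set (M := INR m). assert (HM : 1 <= M) by (apply INR_ge1; auto).
    unfold Fpp. rewrite Hqr. fold M.
    assert (HL2 : 0 <= L ^ 2 / exp L) by (apply Rlt_le, Rdiv_lt_0_compat; nra).
    destruct (Rle_or_lt (d * ln M) (L / 2)) as [Hc|Hc].
    + eapply Rle_trans; [|apply form_ge_T].
      destruct (tail_neg q m Hq Hm) as [HT _]. fold M in HT.
      eapply Rle_trans; [|apply HT].
      assert (E : Rpower M (1 - q) = exp (- (d * ln M))) by (unfold Rpower, d; f_equal; ring).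
      assert (exp (- (L / 2)) <= Rpower M (1 - q)) by (rewrite E; apply exp_le_m; lra).
      rewrite <- exp_half in H.
      specialize (Hsq L HL).
      assert (L ^ 2 / exp L <= Cp * (exp (L / 2) / exp L)).
      { unfold Rdiv. rewrite <- Rmult_assoc. apply Rmult_le_compat_r; [apply Rlt_le, Rinv_0_lt_compat; lra|auto]. }
      pose proof (Rmin_l (Rpower 2 (- q) / Cp) (/ (2 * d))). pose proof (Rpower_pos 2 (- q)).
      apply Rle_trans with (Rpower 2 (- q) / Cp * (L ^ 2 / exp L)).
      { apply Rmult_le_compat_r; auto. }
      apply Rle_trans with (Rpower 2 (- q) / Cp * (Cp * (exp (L / 2) / exp L))).
      { apply Rmult_le_compat_l; auto. apply Rlt_le, Rdiv_lt_0_compat; lra. }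
      replace (Rpower 2 (- q) / Cp * (Cp * (exp (L / 2) / exp L))) with (Rpower 2 (- q) * (exp (L / 2) / exp L)) by (field; lra).
      apply Rmult_le_compat_l; lra.
    + eapply Rle_trans; [|apply form_ge_xS, psum_pw_nonneg].
      pose proof (sum_log_low m Hm). fold M in H.
      assert (ln M <= ln (M + 1)) by (apply ln_le_m; lra).
      assert (L / (2 * d) <= ln M).
      { apply Rmult_le_reg_r with (2 * d); [lra|]. unfold Rdiv. rewrite Rmult_assoc, Rinv_l by lra. lra. }
      assert (L ^ 2 / exp L * / (2 * d) <= X L * psum (pw (-1)) m).
      { replace (L ^ 2 / exp L * / (2 * d)) with (L / exp L * (L / (2 * d))) by (field; lra).
        apply Rmult_le_compat; try lra; apply Rlt_le, Rdiv_lt_0_compat; lra. }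
      pose proof (Rmin_r (Rpower 2 (- q) / Cp) (/ (2 * d))).
      eapply Rle_trans; [|apply H2]. rewrite Rmult_comm. apply Rmult_le_compat_l; auto.
  - set (z := exp (L / d)).
    assert (Hz : 1 <= z) by (unfold z; rewrite <- exp_0; apply exp_le_m; apply Rlt_le, Rdiv_lt_0_compat; lra).
    destruct (ceil_ex z Hz) as [m0 [Hm0 Hzm]]. exists m0. split; auto.
    set (M := INR m0) in *.
    assert (Hzd : Rpower z (- d) = exp (- L)) by (unfold z; rewrite Rpower_exp; f_equal; field; lra).
    assert (HMd : Rpower M (- d) <= exp (- L)) by (rewrite <- Hzd; apply Rpower_base_le_neg; lra).
    assert (HeL' : exp (- L) = / exp L) by apply exp_Ropp.
    assert (Hie : 0 < / exp L) by (apply Rinv_0_lt_compat; lra).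
    assert (HL2 : / exp L <= L ^ 2 / exp L).
    { unfold Rdiv. rewrite <- (Rmult_1_l (/ exp L)) at 1. apply Rmult_le_compat_r; [apply Rlt_le, Rinv_0_lt_compat; lra|nra]. }
    unfold Fpp. rewrite Hqr. fold M. apply form_le2 with (y := X L).
    + destruct (tail_neg q m0 Hq Hm0) as [_ HT]. fold M in HT. eapply Rle_trans; [apply HT|].
      replace (1 - q) with (- d) by (unfold d; ring).
      assert (0 < / (q - 1)) by (apply Rinv_0_lt_compat; lra).
      assert (Rpower M (- d) / (q - 1) <= / (q - 1) * (L ^ 2 / exp L)).
      { unfold Rdiv at 1. rewrite Rmult_comm. apply Rmult_le_compat_l; lra. }
      assert (0 <= 2 * (2 + / d) * (L ^ 2 / exp L)) by (apply Rmult_le_pos; [lra|]; lra).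
      lra.
    + apply psum_pw_nonneg.
    + lra.
    + lra.
    + pose proof (sum_log_up m0 Hm0). fold M in H.
      assert (ln M <= ln 2 + L / d).
      { replace (L / d) with (ln z) by (unfold z; rewrite ln_exp; auto). rewrite <- ln_mult by lra.
        apply ln_le_m; lra. }
      pose proof ln2_le1.
      assert (L / d = L * / d) by (unfold Rdiv; auto).
      assert (0 <= psum (pw (-1)) m0 <= (2 + / d) * L) by (split; [apply psum_pw_nonneg|nra]).
      apply Rle_trans with (2 * L / exp L * ((2 + / d) * L)).
      { apply Rmult_le_compat; try lra. }
      assert (0 <= / (q - 1) * (L ^ 2 / exp L)) by (apply Rmult_le_pos; [apply Rlt_le, Rinv_0_lt_compat; lra|]; lra).
      replace (2 * L / exp L * ((2 + / d) * L)) with (2 * (2 + / d) * (L ^ 2 / exp L)) by (field; lra).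
      lra.
Qed.

Lemma psum_ge1 r m : (1 <= m)%nat -> 1 <= psum (pw r) m.
Proof. intros Hm. rewrite <- (pw_1 r), <- psum_1. apply seg_mono; auto. intros; left; apply pw_pos. Qed.

Lemma pp3_core q r : 1 < q -> r < -1 -> 0 < q + r -> exists c C, 0 < c /\ 0 < C /\ forall L, 1 <= L ->
  (forall m, (1 <= m)%nat -> c * (L / exp L) <= Fpp q r (X L) m) /\
  exists m0, (1 <= m0)%nat /\ Fpp q r (X L) m0 <= C * (L / exp L).
Proof.
  intros Hq Hr Hd0. set (d := q + r). assert (Hd : 0 < d) by exact Hd0.
  set (CS := 1 + / (- r - 1)).
  assert (HCS : 0 < CS) by (unfold CS; assert (0 < / (- r - 1)) by (apply Rinv_0_lt_compat; lra); lra).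
  exists 1, (/ (q - 1) + 2 * CS).
  assert (Hiq : 0 < / (q - 1)) by (apply Rinv_0_lt_compat; lra).
  split; [lra|]. split; [lra|].
  intros L HL. destruct (X_facts L HL) as [[Hx0 Hx1] [[HxL HxU] Hxi]].
  pose proof (exp_pos L) as HeL.
  assert (Hie : 0 < / exp L) by (apply Rinv_0_lt_compat; lra).
  split.
  - intros m Hm. unfold Fpp. eapply Rle_trans; [|apply form_ge_xS, psum_pw_nonneg].
    pose proof (psum_ge1 r m Hm). rewrite Rmult_1_l. unfold Rdiv in *. nra.
  - set (z := exp (L / d)).
    assert (Hz : 1 <= z) by (unfold z; rewrite <- exp_0; apply exp_le_m; apply Rlt_le, Rdiv_lt_0_compat; [lra|exact Hd0]).
    destruct (ceil_ex z Hz) as [m0 [Hm0 Hzm]]. exists m0. split; auto.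
    set (M := INR m0) in *.
    assert (Hzd : Rpower z (- d) = exp (- L)) by (unfold z; rewrite Rpower_exp; f_equal; field; apply Rgt_not_eq, Hd0).
    assert (HMd : Rpower M (- d) <= exp (- L)) by (rewrite <- Hzd; apply Rpower_base_le_neg; lra).
    assert (HeL' : exp (- L) = / exp L) by apply exp_Ropp.
    assert (HL2 : / exp L <= L / exp L).
    { unfold Rdiv. rewrite <- (Rmult_1_l (/ exp L)) at 1. apply Rmult_le_compat_r; lra. }
    unfold Fpp. fold d. fold M. apply form_le2 with (y := X L).
    + destruct (tail_neg q m0 Hq Hm0) as [_ HT]. fold M in HT. eapply Rle_trans; [apply HT|].
      assert (Rpower M (1 - q) <= Rpower M (- d)) by (apply Rpower_expo_le; unfold d; lra).
      assert (Rpower M (1 - q) / (q - 1) <= / (q - 1) * (L / exp L)).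
      { unfold Rdiv at 1. rewrite Rmult_comm. apply Rmult_le_compat_l; lra. }
      assert (0 <= 2 * CS * (L / exp L)) by (apply Rmult_le_pos; lra).
      lra.
    + apply psum_pw_nonneg.
    + lra.
    + lra.
    + pose proof (sum_neg_up r m0 Hr Hm0). fold CS in H.
      apply Rle_trans with (2 * L / exp L * CS).
      { apply Rmult_le_compat; try lra. apply psum_pw_nonneg. }
      assert (0 <= / (q - 1) * (L / exp L)) by (apply Rmult_le_pos; lra).
      replace (2 * L / exp L * CS) with (2 * CS * (L / exp L)) by (field; lra).
      lra.
Qed.


Lemma Rstar_sandwich l be ga x (F : nat -> R) lo hi :
  (forall m, (1 <= m)%nat -> Rm l be ga x m = F m) ->
  (forall m, (1 <= m)%nat -> 0 <= F m) ->
  (forall m, (1 <= m)%nat -> lo <= F m) ->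
  (exists m0, (1 <= m0)%nat /\ F m0 <= hi) ->
  lo <= Rstar l be ga x <= hi.
Proof.
  intros HE H0 Hlo [m0 [Hm0 Hhi]]. split.
  - apply Rstar_ge. intros m Hm. rewrite HE; auto.
  - eapply Rle_trans; [apply (Rstar_le _ _ _ _ m0)|]; auto.
    + intros m Hm; rewrite HE; auto.
    + rewrite HE; auto.
Qed.

Lemma Rstar_seq_X l be ga n : (1 <= n)%nat ->
  Rstar_seq l be ga n = Rstar l be ga (X (ln (INR n))).
Proof. intros Hn. unfold Rstar_seq, X. rewrite exp_ln; auto. apply INR_ge1 in Hn; lra. Qed.

Lemma Fpp_nonneg q r x m : 1 < q -> 0 <= x -> (1 <= m)%nat -> 0 <= Fpp q r x m.
Proof. intros. unfold Fpp. apply form_nonneg; auto. apply psum_pw_nonneg. Qed.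

Lemma exp_ln_n n : (1 <= n)%nat -> exp (ln (INR n)) = INR n.
Proof. intros; apply exp_ln. apply INR_ge1 in H; lra. Qed.

Lemma pp_part : forall (p a s : R) (l : nat -> R),
     0 < p -> 1/2 < a -> 3/2 <= p + a -> 1/2 - p < s ->
     (forall j : nat, (1 <= j)%nat -> (l j) ^ 2 = Rpower (INR j) (- (2 * s))) ->
     let beta := fun j : nat => Rpower (INR j) (2 * p) in
     let gamma := fun j : nat => Rpower (INR j) (- (2 * a)) in
     (s - a < 1/2 ->
        asymp (Rstar_seq l beta gamma)
          (fun n => Rpower (ln (INR n) / INR n) ((2*p + 2*s - 1) / (2*p + 2*a)))) /\
     (s - a = 1/2 ->
        asymp (Rstar_seq l beta gamma) (fun n => (ln (INR n)) ^ 2 / INR n)) /\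
     (s - a > 1/2 ->
        asymp (Rstar_seq l beta gamma) (fun n => ln (INR n) / INR n)).
Proof.
  intros p a s l Hp Ha Hpa Hs Hl beta gamma.
  set (q := 2 * s + 2 * p). set (r := 2 * a - 2 * s).
  assert (Hq : 1 < q) by (unfold q; lra).
  assert (HRm : forall x m, (1 <= m)%nat -> Rm l beta gamma x m = Fpp q r x m).
  { intros x m Hm. unfold Fpp. rewrite (Rm_eq l beta gamma x m (pw (- q)) (pw r)).
    - f_equal. f_equal. f_equal. unfold gamma, beta. rewrite Rpower_div by (apply INR_ge1 in Hm; lra).
      f_equal. unfold q, r. ring.
    - intros j Hj. rewrite Hl by auto. unfold beta, pw. rewrite Rpower_div by (apply INR_ge1 in Hj; lra).
      f_equal. unfold q; ring.
    - intros j Hj. rewrite Hl by auto. unfold gamma, pw. rewrite Rpower_div by (apply INR_ge1 in Hj; lra).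
      f_equal. unfold r; ring. }
  destruct (eventually_ln 1) as [N [HN1 HN]].
  split; [|split].
  - intros Hsa. assert (Hr : -1 < r) by (unfold r; lra).
    destruct (pp1_core q r Hq Hr) as [c [C [Hc [HC Hcore]]]].
    set (e := (2*p + 2*s - 1) / (2*p + 2*a)).
    assert (He : (q - 1) / (q + r) = e) by (unfold e, q, r; field; lra).
    rewrite He in Hcore.
    assert (He0 : 0 <= e) by (unfold e; apply Rlt_le, Rdiv_lt_0_compat; lra).
    exists c, (C * Rpower 2 e), N. split; [auto|]. split; [pose proof (Rpower_pos 2 e); nra|].
    intros n Hn. specialize (HN n Hn). set (L := ln (INR n)) in *.
    assert (Hn1 : (1 <= n)%nat) by lia.
    rewrite Rstar_seq_X by auto. fold L.
    destruct (X_facts L HN) as [[Hx0 Hx1] [[HxL HxU] Hxi]].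
    destruct (Hcore (X L) (conj Hx0 Hx1)) as [Hlo Hhi].
    assert (HLp : 0 < L / INR n) by (apply Rdiv_lt_0_compat; [lra|apply INR_ge1 in Hn1; lra]).
    rewrite <- (exp_ln_n n Hn1). fold L. rewrite <- (exp_ln_n n Hn1) in HLp. fold L in HLp.
    assert (H1 : Rpower (L / exp L) e <= Rpower (X L) e) by (apply Rpower_base_le; lra).
    assert (H2 : Rpower (X L) e <= Rpower 2 e * Rpower (L / exp L) e).
    { rewrite Rpower_mult_distr by lra. apply Rpower_base_le; auto. unfold Rdiv in *; lra. }
    destruct (Rstar_sandwich l beta gamma (X L) (Fpp q r (X L)) (c * Rpower (X L) e) (C * Rpower (X L) e))
      as [R1 R2]; auto.
    + intros; apply Fpp_nonneg; lra || auto.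
    + split.
      * eapply Rle_trans; [|apply R1]. apply Rmult_le_compat_l; lra.
      * eapply Rle_trans; [apply R2|]. rewrite Rmult_assoc. apply Rmult_le_compat_l; lra.
  - intros Hsa. assert (Hr : r = -1) by (unfold r; lra).
    assert (Hq2 : q + r = q - 1) by lra.
    destruct (pp2_core q Hq) as [c [C [Hc [HC Hcore]]]].
    exists c, C, N. split; [auto|]. split; [auto|].
    intros n Hn. specialize (HN n Hn). set (L := ln (INR n)) in *.
    assert (Hn1 : (1 <= n)%nat) by lia.
    rewrite Rstar_seq_X by auto. fold L. rewrite <- (exp_ln_n n Hn1). fold L.
    destruct (X_facts L HN) as [[Hx0 Hx1] _].
    destruct (Hcore L HN) as [Hlo Hhi].
    rewrite Hr in HRm.
    apply (Rstar_sandwich l beta gamma (X L) (Fpp q (-1) (X L))); auto.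
    intros; apply Fpp_nonneg; lra || auto.
  - intros Hsa. assert (Hr : r < -1) by (unfold r; lra).
    assert (Hd : 0 < q + r) by (unfold q, r; lra).
    destruct (pp3_core q r Hq Hr Hd) as [c [C [Hc [HC Hcore]]]].
    exists c, C, N. split; [auto|]. split; [auto|].
    intros n Hn. specialize (HN n Hn). set (L := ln (INR n)) in *.
    assert (Hn1 : (1 <= n)%nat) by lia.
    rewrite Rstar_seq_X by auto. fold L. rewrite <- (exp_ln_n n Hn1). fold L.
    destruct (X_facts L HN) as [[Hx0 Hx1] _].
    destruct (Hcore L HN) as [Hlo Hhi].
    apply (Rstar_sandwich l beta gamma (X L) (Fpp q r (X L))); auto.
    intros; apply Fpp_nonneg; lra || auto.
Qed.


Lemma form_le3 T g x S B : T <= B -> 0 <= S -> 0 <= g -> 0 <= x -> g * S + x * S <= B ->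
  Rmax T (Rmax g x * S) <= B.
Proof. intros. apply Rmax_lub; auto. eapply Rle_trans; [|eauto].
  assert (Rmax g x <= g + x) by (apply Rmax_lub; lra). nra. Qed.

Lemma pe_term s a : 0 < a -> exists K, 0 < K /\ forall y z, 1 <= y <= z ->
  Rpower y (- (2 * s)) * exp (Rpower y (2 * a)) <= K * (Rpower z (- (2 * s)) * exp (Rpower z (2 * a))).
Proof.
  intros Ha. destruct (Rle_or_lt s 0) as [Hs|Hs].
  - exists 1. split; [lra|]. intros y z Hyz. rewrite Rmult_1_l.
    apply Rmult_le_compat; try (left; apply Rpower_pos) ; try (left; apply exp_pos).
    + apply Rpower_base_le; lra.
    + apply exp_le_m. apply Rpower_base_le; lra.
  - set (b := s / a). assert (Hb : 0 < b) by (unfold b; apply Rdiv_lt_0_compat; lra).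
    destruct (poly_exp b 1 ltac:(lra)) as [C [HC HP]].
    exists (C * exp 1). split; [pose proof (exp_pos 1); nra|]. intros y z Hyz.
    set (J := Rpower y (2 * a)). set (M := Rpower z (2 * a)).
    assert (HJ : 1 <= J) by (apply Rpower_ge1; lra).
    assert (HJM : J <= M) by (apply Rpower_base_le; lra).
    assert (Ey : Rpower y (- (2 * s)) = / Rpower J b).
    { rewrite <- Rpower_Ropp. unfold J. rewrite Rpower_mult. f_equal. unfold b. field. lra. }
    assert (Ez : Rpower z (- (2 * s)) = / Rpower M b).
    { rewrite <- Rpower_Ropp. unfold M. rewrite Rpower_mult. f_equal. unfold b. field. lra. }
    rewrite Ey, Ez.
    assert (H1 : M <= J * (1 + (M - J))) by nra.
    assert (H2 : Rpower M b <= Rpower J b * Rpower (1 + (M - J)) b).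
    { rewrite Rpower_mult_distr by lra. apply Rpower_base_le; lra. }
    specialize (HP (1 + (M - J)) ltac:(lra)). rewrite Rmult_1_l in HP.
    assert (H3 : exp (1 + (M - J)) = exp 1 * exp M / exp J).
    { replace (1 + (M - J)) with (1 + M + - J) by ring. rewrite !exp_plus, exp_Ropp. field.
      apply Rgt_not_eq, exp_pos. }
    rewrite H3 in HP.
    pose proof (Rpower_pos J b). pose proof (Rpower_pos M b). pose proof (exp_pos J). pose proof (exp_pos M).
    pose proof (exp_pos 1). pose proof (Rpower_pos (1 + (M - J)) b).
    assert (H4b : Rpower M b <= Rpower J b * (C * (exp 1 * exp M / exp J))).
    { eapply Rle_trans; [apply H2|]. apply Rmult_le_compat_l; lra. }
    apply Rmult_le_reg_r with (Rpower M b * Rpower J b); [nra|].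
    replace (/ Rpower J b * exp J * (Rpower M b * Rpower J b)) with (Rpower M b * exp J) by (field; lra).
    replace (C * exp 1 * (/ Rpower M b * exp M) * (Rpower M b * Rpower J b)) with (Rpower J b * (C * (exp 1 * exp M / exp J)) * exp J) by (field; lra).
    apply Rmult_le_compat_r; lra.
Qed.

Definition wpe s a j := Rpower (INR j) (- (2 * s)) / exp (- Rpower (INR j) (2 * a) + 1).
Definition Fpe p a s x m := Rmax (tail (pw (- (2 * s + 2 * p))) m)
  (Rmax (exp (- Rpower (INR m) (2 * a) + 1) / Rpower (INR m) (2 * p)) x * psum (wpe s a) m).

Lemma wpe_eq s a j : wpe s a j = Rpower (INR j) (- (2 * s)) * exp (Rpower (INR j) (2 * a)) * exp (- 1).
Proof. unfold wpe. replace (- Rpower (INR j) (2 * a) + 1) with (- (Rpower (INR j) (2 * a) + - 1)) by ring.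
  rewrite exp_Ropp, exp_plus. field. split; apply Rgt_not_eq, exp_pos. Qed.

Lemma wpe_pos s a j : 0 < wpe s a j.
Proof. unfold wpe. apply Rdiv_lt_0_compat; [apply Rpower_pos|apply exp_pos]. Qed.

Lemma psum_wpe_nonneg s a m : 0 <= psum (wpe s a) m.
Proof. apply psum_nonneg; intros; left; apply wpe_pos. Qed.

Lemma psum_last f m : (1 <= m)%nat -> (forall j, 0 <= f j) -> f m <= psum f m.
Proof. intros Hm H. destruct m; [lia|]. simpl. assert (0 <= psum f m) by (apply psum_nonneg; auto). lra. Qed.

Lemma pe_core p a s : 0 < p -> 0 < a -> 1 < 2 * s + 2 * p ->
  exists c C, 0 < c /\ 0 < C /\ forall L, 2 <= L ->
  (forall m, (1 <= m)%nat -> c * Rpower L (- ((2*p + 2*s - 1) / (2*a))) <= Fpe p a s (X L) m) /\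
  exists m0, (1 <= m0)%nat /\ Fpe p a s (X L) m0 <= C * Rpower L (- ((2*p + 2*s - 1) / (2*a))).
Proof.
  intros Hp Ha Hq'. assert (Hq0 : 0 < 2*p + 2*s - 1) by lra. set (q := 2 * s + 2 * p) in *. assert (Hq : 1 < q) by exact Hq'.
  set (k := (2*p + 2*s - 1) / (2*a)).
  assert (Hk : 0 < k) by (unfold k; apply Rdiv_lt_0_compat; lra).
  assert (Hk2 : (1 - q) / (2 * a) = - k) by (unfold k, q; field; lra).
  destruct (poly_exp (s / a) (/ 2) ltac:(lra)) as [Cq [HCq HPq]].
  destruct (poly_exp (1 + p / a) (/ 2) ltac:(lra)) as [Cq2 [HCq2 HPq2]].
  destruct (pe_term s a Ha) as [Kt [HKt HT]].
  set (c1 := Rpower 2 (- q) * Rpower 2 (- k)).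
  set (c2 := exp (- 1) / Cq).
  set (K1 := Rpower 2 (q - 1) * Rpower 2 k).
  exists (Rmin c1 c2), ((/ (q - 1) + exp 1 * Kt + 2 * Kt * Cq2) * K1).
  assert (Hc1 : 0 < c1) by (unfold c1; pose proof (Rpower_pos 2 (- q)); pose proof (Rpower_pos 2 (- k)); nra).
  assert (Hc2 : 0 < c2) by (unfold c2; apply Rdiv_lt_0_compat; [apply exp_pos|auto]).
  assert (HK1 : 0 < K1) by (unfold K1; pose proof (Rpower_pos 2 (q - 1)); pose proof (Rpower_pos 2 k); nra).
  assert (Hiq : 0 < / (q - 1)) by (apply Rinv_0_lt_compat; lra).
  pose proof (exp_pos 1).
  split; [apply Rmin_pos; auto|].
  split; [apply Rmult_lt_0_compat; auto; nra|].
  intros L HL. destruct (X_facts L ltac:(lra)) as [[Hx0 Hx1] [[HxL HxU] Hxi]].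
  pose proof (exp_pos L) as HeL.
  assert (Hie : 0 < / exp L) by (apply Rinv_0_lt_compat; lra).
  set (v := Rpower L (- k)). assert (Hv : 0 < v) by apply Rpower_pos.
  assert (Hv1 : v <= 1) by (apply Rpower_le1; lra).
  split.
  - intros m Hm. set (M := INR m). assert (HM : 1 <= M) by (apply INR_ge1; auto).
    unfold Fpe. fold M. fold q.
    set (A := Rpower M (2 * a)). assert (HA : 1 <= A) by (apply Rpower_ge1; lra).
    destruct (Rle_or_lt A (2 * L)) as [Hc|Hc].
    + eapply Rle_trans; [|apply form_ge_T].
      destruct (tail_neg q m Hq Hm) as [HTl _]. fold M in HTl.
      eapply Rle_trans; [|apply HTl].
      assert (E : Rpower M (1 - q) = Rpower A (- k)).
      { unfold A. rewrite Rpower_mult. f_equal. rewrite <- Hk2. field. lra. }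
      assert (Rpower (2 * L) (- k) <= Rpower A (- k)) by (apply Rpower_base_le_neg; lra).
      rewrite <- Rpower_mult_distr in H0 by lra.
      pose proof (Rmin_l c1 c2). pose proof (Rpower_pos 2 (- q)). pose proof (Rpower_pos 2 (- k)).
      rewrite E. unfold c1 in *. fold v in H0.
      apply Rle_trans with (Rpower 2 (- q) * Rpower 2 (- k) * v).
      { apply Rmult_le_compat_r; lra. }
      rewrite Rmult_assoc. apply Rmult_le_compat_l; lra.
    + eapply Rle_trans; [|apply form_ge_xS, psum_wpe_nonneg].
      pose proof (psum_last (wpe s a) m Hm (fun j => Rlt_le _ _ (wpe_pos s a j))) as Hlast.
      rewrite wpe_eq in Hlast. fold M A in Hlast.
      specialize (HPq A HA).
      assert (EA : Rpower M (2 * s) = Rpower A (s / a)) by (unfold A; rewrite Rpower_mult; f_equal; field; lra).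
      assert (Hm2 : Rpower M (- (2 * s)) = / Rpower M (2 * s)) by apply Rpower_Ropp.
      rewrite Hm2, EA in Hlast.
      assert (Hw : exp (A / 2) / Cq <= / Rpower A (s / a) * exp A).
      { assert (HeA2 : exp A = exp (A / 2) * exp (A / 2)) by (rewrite <- exp_plus; f_equal; field).
        pose proof (Rpower_pos A (s / a)). pose proof (exp_pos (A / 2)).
        apply Rmult_le_reg_r with (Cq * Rpower A (s / a)); [nra|].
        replace (exp (A / 2) / Cq * (Cq * Rpower A (s / a))) with (exp (A / 2) * Rpower A (s / a)) by (field; lra).
        replace (/ Rpower A (s / a) * exp A * (Cq * Rpower A (s / a))) with (exp (A / 2) * (Cq * exp (/ 2 * A))).
        2: { rewrite HeA2. replace (/ 2 * A) with (A / 2) by field. field. lra. }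
        apply Rmult_le_compat_l; lra. }
      assert (HeA : exp L <= exp (A / 2)) by (apply exp_le_m; lra).
      assert (Hfin : exp (- 1) / Cq <= X L * psum (wpe s a) m).
      { apply Rle_trans with (/ exp L * (exp (A / 2) / Cq * exp (- 1))).
        - replace (exp (- 1) / Cq) with (/ exp L * (exp L / Cq * exp (- 1))) by (field; lra).
          apply Rmult_le_compat_l; [lra|]. apply Rmult_le_compat_r; [left; apply exp_pos|].
          unfold Rdiv. apply Rmult_le_compat_r; [left; apply Rinv_0_lt_compat; lra|lra].
        - apply Rmult_le_compat; try lra.
          + apply Rmult_le_pos; [apply Rlt_le, Rdiv_lt_0_compat; [apply exp_pos|lra]|left; apply exp_pos].
          + eapply Rle_trans; [|apply Hlast]. apply Rmult_le_compat_r; [left; apply exp_pos|lra]. }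
      pose proof (Rmin_r c1 c2). unfold c2 in *.
      apply Rle_trans with (exp (- 1) / Cq * v); [apply Rmult_le_compat_r; lra|].
      apply Rle_trans with (exp (- 1) / Cq); [|auto].
      assert (0 < exp (- 1) / Cq) by (apply Rdiv_lt_0_compat; [apply exp_pos|lra]). nra.
  - set (z := Rpower (L / 2) (/ (2 * a))).
    assert (Hz : 1 <= z) by (apply Rpower_ge1; [lra|apply Rlt_le, Rinv_0_lt_compat; lra]).
    destruct (floor1_ex z Hz) as [m0 [Hm0 Hzm]]. exists m0. split; auto.
    set (M := INR m0) in *. assert (HM : 1 <= M) by (apply INR_ge1; auto).
    unfold Fpe. fold M. fold q.
    set (A := Rpower M (2 * a)). assert (HA : 1 <= A) by (apply Rpower_ge1; lra).
    assert (HAz : A <= L / 2).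
    { unfold A. replace (L / 2) with (Rpower z (2 * a)).
      - apply Rpower_base_le; lra.
      - unfold z. rewrite Rpower_mult. replace (/ (2 * a) * (2 * a)) with 1 by (field; lra). apply Rpower_1; lra. }
    assert (HMq : Rpower M (1 - q) <= K1 * v).
    { assert (Rpower M (1 - q) <= Rpower (z / 2) (1 - q)) by (apply Rpower_base_le_neg; lra).
      assert (Rpower (z / 2) (1 - q) = Rpower 2 (q - 1) * Rpower z (1 - q)).
      { unfold Rdiv. rewrite <- Rpower_mult_distr by (try apply Rinv_0_lt_compat; lra).
        rewrite Rpower_inv by lra. replace (- (1 - q)) with (q - 1) by ring. ring. }
      assert (Rpower z (1 - q) = Rpower 2 k * v).
      { unfold z, v. rewrite Rpower_mult. replace (/ (2 * a) * (1 - q)) with (- k).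
        2: { rewrite <- Hk2. field. lra. }
        unfold Rdiv. rewrite <- Rpower_mult_distr by (try apply Rinv_0_lt_compat; lra).
        rewrite Rpower_inv by lra. replace (- - k) with k by ring. ring. }
      unfold K1. nra. }
    pose proof (Rpower_pos M (1 - q)).
    assert (HS : psum (wpe s a) m0 <= Kt * (M * (Rpower M (- (2 * s)) * exp A))).
    { apply Rle_trans with (psum (fun _ => Kt * (Rpower M (- (2 * s)) * exp A)) m0).
      - apply psum_le. intros j Hj. rewrite wpe_eq.
        assert (1 <= INR j <= M) by (split; [apply INR_ge1; lia|apply le_INR; lia]).
        specialize (HT (INR j) M H1). fold A in HT.
        assert (exp (- 1) <= 1) by (rewrite <- exp_0; apply exp_le_m; lra).
        pose proof (Rpower_pos (INR j) (- (2 * s))). pose proof (exp_pos (Rpower (INR j) (2 * a))).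
        pose proof (exp_pos (- 1)).
        assert (0 <= Rpower (INR j) (- (2 * s)) * exp (Rpower (INR j) (2 * a))) by nra.
        nra.
      - rewrite psum_const. fold M. right; ring. }
    assert (HMs : M * Rpower M (- (2 * s)) = Rpower M (1 - q) * Rpower M (2 * p)).
    { rewrite <- Rpower_plus. rewrite Rpower_mul_self by lra. f_equal. unfold q; ring. }
    pose proof (Rpower_pos M (2 * p)). pose proof (exp_pos A).
    set (g := exp (- A + 1) / Rpower M (2 * p)).
    assert (Hg : 0 <= g) by (unfold g; left; apply Rdiv_lt_0_compat; [apply exp_pos|lra]).
    assert (HS0 := psum_wpe_nonneg s a m0).
    apply form_le3; auto; try lra.
    + destruct (tail_neg q m0 Hq Hm0) as [_ HTu]. fold M in HTu. eapply Rle_trans; [apply HTu|].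
      assert (Rpower M (1 - q) / (q - 1) <= / (q - 1) * (K1 * v)).
      { unfold Rdiv. rewrite Rmult_comm. apply Rmult_le_compat_l; lra. }
      assert (0 < exp 1 * Kt + 2 * Kt * Cq2) by (pose proof (exp_pos 1); nra).
      assert (0 <= (exp 1 * Kt + 2 * Kt * Cq2) * K1 * v) by (apply Rmult_le_pos; [apply Rmult_le_pos|]; lra).
      nra.
    +
      assert (HgS : g * psum (wpe s a) m0 <= exp 1 * Kt * Rpower M (1 - q)).
      { assert (HS' : psum (wpe s a) m0 <= Kt * (Rpower M (1 - q) * Rpower M (2 * p) * exp A)).
        { rewrite <- HMs. eapply Rle_trans; [apply HS|]. right; ring. }
        apply Rle_trans with (g * (Kt * (Rpower M (1 - q) * Rpower M (2 * p) * exp A))).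
        - apply Rmult_le_compat_l; auto.
        - unfold g. replace (- A + 1) with (1 + - A) by ring. rewrite exp_plus, exp_Ropp.
          right. field. split; lra. }
      assert (HxS : X L * psum (wpe s a) m0 <= 2 * Kt * Cq2 * Rpower M (1 - q)).
      { assert (HMp : Rpower M (2 * p) <= Rpower L (p / a)).
        { apply Rle_trans with (Rpower z (2 * p)); [apply Rpower_base_le; lra|].
          unfold z. rewrite Rpower_mult. replace (/ (2 * a) * (2 * p)) with (p / a) by (field; lra).
          apply Rpower_base_le; [apply Rlt_le, Rdiv_lt_0_compat; lra|lra|lra]. }
        assert (HeA : exp A <= exp (L / 2)) by (apply exp_le_m; lra).
        assert (HS' : psum (wpe s a) m0 <= Kt * Rpower M (1 - q) * Rpower L (p / a) * exp (L / 2)).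
        { eapply Rle_trans; [apply HS|]. replace (Kt * (M * (Rpower M (- (2 * s)) * exp A))) with (Kt * (M * Rpower M (- (2 * s))) * exp A) by ring. rewrite HMs.
          pose proof (Rpower_pos L (p / a)). pose proof (exp_pos (L / 2)).
          assert (Rpower M (2 * p) * exp A <= Rpower L (p / a) * exp (L / 2)) by (apply Rmult_le_compat; lra).
          assert (0 <= Kt * Rpower M (1 - q)) by nra.
          replace (Kt * (Rpower M (1 - q) * Rpower M (2 * p)) * exp A) with (Kt * Rpower M (1 - q) * (Rpower M (2 * p) * exp A)) by ring.
          replace (Kt * Rpower M (1 - q) * Rpower L (p / a) * exp (L / 2)) with (Kt * Rpower M (1 - q) * (Rpower L (p / a) * exp (L / 2))) by ring.
          apply Rmult_le_compat_l; lra. }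
        specialize (HPq2 L ltac:(lra)).
        rewrite <- Rplus_comm, <- Rpower_mul_self in HPq2 by lra.
        replace (/ 2 * L) with (L / 2) in HPq2 by field.
        apply Rle_trans with (2 * L / exp L * (Kt * Rpower M (1 - q) * Rpower L (p / a) * exp (L / 2))).
        { apply Rmult_le_compat; lra. }
        replace (2 * L / exp L * (Kt * Rpower M (1 - q) * Rpower L (p / a) * exp (L / 2)))
          with (2 * Kt * Rpower M (1 - q) * (L * Rpower L (p / a)) * (exp (L / 2) / exp L)) by (field; lra).
        rewrite exp_half.
        assert (exp (- (L / 2)) = / exp (L / 2)) by apply exp_Ropp.
        pose proof (exp_pos (L / 2)).
        assert (0 <= 2 * Kt * Rpower M (1 - q)) by nra.
        apply Rle_trans with (2 * Kt * Rpower M (1 - q) * (Cq2 * exp (L / 2)) * exp (- (L / 2))).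
        { apply Rmult_le_compat_r; [left; apply exp_pos|]. apply Rmult_le_compat_l; lra. }
        right. rewrite H3. field. lra. }
      assert (0 < exp 1 * Kt + 2 * Kt * Cq2) by (pose proof (exp_pos 1); nra).
      assert ((exp 1 * Kt + 2 * Kt * Cq2) * Rpower M (1 - q) <= (exp 1 * Kt + 2 * Kt * Cq2) * (K1 * v)) by (apply Rmult_le_compat_l; lra).
      assert (0 <= / (q - 1) * K1 * v) by (apply Rmult_le_pos; [apply Rmult_le_pos|]; lra).
      nra.
Qed.


Lemma pe_part : forall (p a s : R) (l : nat -> R),
     0 < p -> 0 < a -> 1/2 - p < s ->
     (forall j : nat, (1 <= j)%nat -> (l j) ^ 2 = Rpower (INR j) (- (2 * s))) ->
     let beta := fun j : nat => Rpower (INR j) (2 * p) in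
     let gamma := fun j : nat => exp (- Rpower (INR j) (2 * a) + 1) in
     asymp (Rstar_seq l beta gamma)
       (fun n => Rpower (ln (INR n)) (- ((2*p + 2*s - 1) / (2*a)))).
Proof.
  intros p a s l Hp Ha Hs Hl beta gamma.
  assert (HRm : forall x m, (1 <= m)%nat -> Rm l beta gamma x m = Fpe p a s x m).
  { intros x m Hm. unfold Fpe. rewrite (Rm_eq l beta gamma x m (pw (- (2 * s + 2 * p))) (wpe s a)).
    - reflexivity.
    - intros j Hj. rewrite Hl by auto. unfold beta, pw. rewrite Rpower_div by (apply INR_ge1 in Hj; lra).
      f_equal. ring.
    - intros j Hj. rewrite Hl by auto. unfold gamma, wpe. reflexivity. }
  destruct (pe_core p a s Hp Ha ltac:(lra)) as [c [C [Hc [HC Hcore]]]].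
  destruct (eventually_ln 2) as [N [HN1 HN]].
  exists c, C, N. split; [auto|]. split; [auto|].
  intros n Hn. specialize (HN n Hn). set (L := ln (INR n)) in *.
  assert (Hn1 : (1 <= n)%nat) by lia.
  rewrite Rstar_seq_X by auto. fold L.
  destruct (X_facts L ltac:(lra)) as [[Hx0 Hx1] _].
  destruct (Hcore L HN) as [Hlo Hhi].
  apply (Rstar_sandwich l beta gamma (X L) (Fpe p a s (X L))); auto.
  intros m Hm. unfold Fpe. apply form_nonneg; [lra|apply psum_wpe_nonneg].
Qed.


Definition uep s p j := Rpower (INR j) (- (2 * s)) / exp (Rpower (INR j) (2 * p) - 1).
Definition gep a p m := Rpower (INR m) (- (2 * a)) / exp (Rpower (INR m) (2 * p) - 1).
Definition Fep p a s x m := Rmax (tail (uep s p) m) (Rmax (gep a p m) x * psum (pw (2 * a - 2 * s)) m).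

Lemma uep_pos s p j : 0 < uep s p j.
Proof. unfold uep. apply Rdiv_lt_0_compat; [apply Rpower_pos|apply exp_pos]. Qed.

Lemma seg_cmp f g m M : (m <= M)%nat -> (forall j, (m < j <= M)%nat -> f j <= g j) ->
  psum f M - psum f m <= psum g M - psum g m.
Proof. intros Hm H. apply seg_tele; auto. intros j Hj. destruct j; [lia|]. simpl. 
  assert (f (S j) <= g (S j)) by (apply H; lia). lra. Qed.

Lemma uep_bound s p : 0 < p -> exists C0, 0 < C0 /\ forall j, (1 <= j)%nat ->
  uep s p j <= C0 * exp (- (Rpower (INR j) (2 * p) / 2)) * pw (- 2) j.
Proof.
  intros Hp. destruct (poly_exp ((1 - s) / p) (/ 2) ltac:(lra)) as [C [HC HP]].
  exists (C * exp 1). split; [pose proof (exp_pos 1); nra|]. intros j Hj.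
  set (y := INR j). assert (Hy : 1 <= y) by (apply INR_ge1; auto).
  set (P := Rpower y (2 * p)). assert (HP1 : 1 <= P) by (apply Rpower_ge1; lra).
  specialize (HP P HP1).
  assert (E : Rpower P ((1 - s) / p) = Rpower y (2 - 2 * s)) by (unfold P; rewrite Rpower_mult; f_equal; field; lra).
  rewrite E in HP.
  assert (E2 : Rpower y (- (2 * s)) = Rpower y (2 - 2 * s) * Rpower y (- 2)) by (rewrite <- Rpower_plus; f_equal; ring).
  unfold uep, pw. fold y P. rewrite E2.
  assert (E3 : / exp (P - 1) = exp 1 * exp (- (P / 2)) * exp (- (P / 2))).
  { rewrite <- !exp_plus. rewrite <- exp_Ropp. f_equal. field. }
  unfold Rdiv. rewrite E3.
  assert (E4 : C * exp (/ 2 * P) * exp (- (P / 2)) = C).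
  { rewrite Rmult_assoc, <- exp_plus. replace (/ 2 * P + - (P / 2)) with 0 by field. rewrite exp_0; ring. }
  pose proof (Rpower_pos y (-2)). pose proof (exp_pos 1). pose proof (exp_pos (- (P / 2))).
  pose proof (Rpower_pos y (2 - 2 * s)).
  apply Rle_trans with (C * exp (/ 2 * P) * Rpower y (- 2) * (exp 1 * exp (- (P / 2)) * exp (- (P / 2)))).
  - apply Rmult_le_compat_r; [pose proof (exp_pos (- (P / 2))); nra|]. apply Rmult_le_compat_r; lra.
  - right. replace (C * exp (/ 2 * P) * Rpower y (- 2) * (exp 1 * exp (- (P / 2)) * exp (- (P / 2))))
      with ((C * exp (/ 2 * P) * exp (- (P / 2))) * exp 1 * exp (- (P / 2)) * Rpower y (- 2)) by ring.
    rewrite E4. unfold Rdiv. ring.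
Qed.

Lemma ep_tail s p : 0 < p -> exists K, 0 < K /\
  (forall m, (1 <= m)%nat -> uep s p (S m) <= tail (uep s p) m) /\
  (forall m L, (1 <= m)%nat -> 2 * L <= Rpower (INR m) (2 * p) -> tail (uep s p) m <= K / exp L).
Proof.
  intros Hp. destruct (uep_bound s p Hp) as [C0 [HC0 HB]]. exists C0. split; auto.
  assert (Hseg : forall m c M, (1 <= m <= M)%nat -> 0 <= c ->
     (forall j, (m < j <= M)%nat -> exp (- (Rpower (INR j) (2 * p) / 2)) <= c) ->
     psum (uep s p) M - psum (uep s p) m <= C0 * c).
  { intros m c M HmM Hc Hj.
    eapply Rle_trans; [apply (seg_cmp _ (fun j => C0 * c * pw (- 2) j)); [lia|]|].
    - intros j Hj'. eapply Rle_trans; [apply HB; lia|]. pose proof (pw_pos (- 2) j).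
      apply Rmult_le_compat_r; [lra|]. apply Rmult_le_compat_l; [lra|]. apply Hj; auto.
    - rewrite !psum_scal. rewrite <- Rmult_minus_distr_l.
      pose proof (seg_neg 2 m M ltac:(lra) HmM).
      assert (Rpower (INR m) (1 - 2) / (2 - 1) <= 1).
      { replace (2 - 1) with 1 by ring. unfold Rdiv. rewrite Rinv_1, Rmult_1_r.
        apply Rpower_le1; [apply INR_ge1; lia|lra]. }
      assert (0 <= C0 * c) by nra. rewrite <- (Rmult_1_r (C0 * c)) at 2. apply Rmult_le_compat_l; [lra|]. replace (- (2)) with (-2) in H by ring. lra. }
  split.
  - intros m Hm. destruct (tail_facts (uep s p) m (C0 * 1)) as [_ H2].
    + intros; left; apply uep_pos.
    + intros M HM. destruct (Nat.eq_dec M m) as [e|e].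
      * subst. rewrite Rminus_diag. lra.
      * apply Hseg; [lia|lra|]. intros j Hj. rewrite <- exp_0. apply exp_le_m.
        assert (0 < Rpower (INR j) (2 * p)) by apply Rpower_pos. lra.
    + specialize (H2 (S m) ltac:(lia)). simpl in H2. lra.
  - intros m L Hm HL. destruct (tail_facts (uep s p) m (C0 * / exp L)) as [H1 _].
    + intros; left; apply uep_pos.
    + intros M HM. destruct (Nat.eq_dec M m) as [e|e].
      * subst. rewrite Rminus_diag. pose proof (exp_pos L). assert (0 < / exp L) by (apply Rinv_0_lt_compat; lra). nra.
      * apply Hseg; [lia|left; apply Rinv_0_lt_compat, exp_pos|]. intros j Hj. rewrite <- exp_Ropp. apply exp_le_m.
        assert (Rpower (INR m) (2 * p) <= Rpower (INR j) (2 * p)).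
        { apply Rpower_base_le; [lra|apply INR_ge1 in Hm; lra|apply le_INR; lia]. }
        lra.
    + unfold Rdiv. auto.
Qed.

Lemma ep_small s p : 0 < p -> exists c3, 0 < c3 /\ forall L m, 1 <= L -> (1 <= m)%nat ->
  Rpower (INR m + 1) (2 * p) <= L / 2 -> c3 * (exp (L / 4) / exp L) <= tail (uep s p) m.
Proof.
  intros Hp. destruct (ep_tail s p Hp) as [K [HK [Hlow _]]].
  destruct (poly_exp (s / p) (/ 4) ltac:(lra)) as [C' [HC' HP]].
  exists (/ C'). split; [apply Rinv_0_lt_compat; lra|]. intros L m HL Hm HPL.
  eapply Rle_trans; [|apply Hlow; auto].
  unfold uep. rewrite S_INR. set (y := INR m + 1). assert (Hy : 1 <= y) by (unfold y; pose proof (pos_INR m); lra).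
  set (P := Rpower y (2 * p)) in *. assert (HP1 : 1 <= P) by (apply Rpower_ge1; lra).
  assert (HPL' : P <= L / 2) by exact HPL.
  specialize (HP P HP1).
  assert (E : Rpower P (s / p) = Rpower y (2 * s)) by (unfold P; rewrite Rpower_mult; f_equal; field; lra).
  rewrite E in HP. rewrite Rpower_Ropp.
  pose proof (Rpower_pos y (2 * s)). pose proof (exp_pos (P - 1)). pose proof (exp_pos L).
  assert (HH1 : exp (L / 4) / exp L <= exp (- (/ 4 * P)) * exp (- (P - 1))).
  { rewrite <- exp_plus. unfold Rdiv. rewrite <- exp_Ropp, <- exp_plus. apply exp_le_m. lra. }
  assert (HH2 : exp (- (/ 4 * P)) = / exp (/ 4 * P)) by apply exp_Ropp.
  assert (HH3 : exp (- (P - 1)) = / exp (P - 1)) by apply exp_Ropp.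
  rewrite HH2, HH3 in HH1. pose proof (exp_pos (/ 4 * P)).
  apply Rle_trans with (/ C' * (/ exp (/ 4 * P) * / exp (P - 1))).
  { apply Rmult_le_compat_l; [left; apply Rinv_0_lt_compat; lra|auto]. }
  unfold Rdiv. rewrite <- Rmult_assoc. apply Rmult_le_compat_r; [left; apply Rinv_0_lt_compat; lra|].
  rewrite <- Rinv_mult. apply Rinv_le_contravar; [lra|]. exact HP.
Qed.

Lemma ep_m0 a p : 0 < p -> 0 < a -> forall L, 1 <= L -> exists m0, (1 <= m0)%nat /\
  2 * L <= Rpower (INR m0) (2 * p) /\ INR m0 <= 2 * Rpower (2 * L) (/ (2 * p)) /\
  gep a p m0 <= / exp L.
Proof.
  intros Hp Ha L HL. set (z := Rpower (2 * L) (/ (2 * p))).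
  assert (Hz : 1 <= z) by (apply Rpower_ge1; [lra|left; apply Rinv_0_lt_compat; lra]).
  destruct (ceil_ex z Hz) as [m0 [Hm0 Hzm]]. exists m0. split; auto.
  assert (HP : 2 * L <= Rpower (INR m0) (2 * p)).
  { replace (2 * L) with (Rpower z (2 * p)).
    - apply Rpower_base_le; lra.
    - unfold z. rewrite Rpower_mult. replace (/ (2 * p) * (2 * p)) with 1 by (field; lra). apply Rpower_1; lra. }
  split; auto. split; [lra|].
  unfold gep. assert (Rpower (INR m0) (- (2 * a)) <= 1) by (apply Rpower_le1; [apply INR_ge1; auto|lra]).
  pose proof (Rpower_pos (INR m0) (- (2 * a))).
  assert (/ exp (Rpower (INR m0) (2 * p) - 1) <= / exp L).
  { apply Rinv_le_contravar; [apply exp_pos|]. apply exp_le_m. lra. }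
  assert (0 < / exp (Rpower (INR m0) (2 * p) - 1)) by (apply Rinv_0_lt_compat, exp_pos).
  unfold Rdiv. nra.
Qed.


Lemma Fep_nonneg p a s x m : 0 <= x -> 0 <= Fep p a s x m.
Proof. intros. unfold Fep. apply form_nonneg; auto. apply psum_pw_nonneg. Qed.

Lemma ep1_core p a s : 0 < p -> 1/2 < a -> s - a < 1/2 ->
  exists c C, 0 < c /\ 0 < C /\ forall L, 4 <= L ->
  (forall m, (1 <= m)%nat -> c * (Rpower L ((2*p + 2*a - 2*s + 1) / (2*p)) / exp L) <= Fep p a s (X L) m) /\
  exists m0, (1 <= m0)%nat /\ Fep p a s (X L) m0 <= C * (Rpower L ((2*p + 2*a - 2*s + 1) / (2*p)) / exp L).
Proof.
  intros Hp Ha Hsa. set (r := 2 * a - 2 * s). assert (Hr : -1 < r) by (unfold r; lra).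
  set (kk := (2*p + 2*a - 2*s + 1) / (2*p)).
  set (e' := (r + 1) / (2 * p)). assert (He' : 0 < e') by (unfold e'; apply Rdiv_lt_0_compat; lra).
  assert (Hkk : kk = e' + 1) by (unfold kk, e', r; field; lra).
  destruct (sum_low r Hr) as [cS [HcS Hlow]]. destruct (sum_up r Hr) as [CS [HCS Hup]].
  destruct (ep_tail s p Hp) as [K [HK [_ Htu]]].
  destruct (ep_small s p Hp) as [c3 [Hc3 Hsm]].
  destruct (poly_exp kk (/ 4) ltac:(lra)) as [Cv [HCv HPv]].
  set (c4 := cS * Rpower 2 (- (r + 1)) * Rpower 2 (- e')).
  assert (Hc4 : 0 < c4) by (unfold c4; pose proof (Rpower_pos 2 (- (r + 1))); pose proof (Rpower_pos 2 (- e')); apply Rmult_lt_0_compat; [apply Rmult_lt_0_compat|]; auto).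
  set (C4 := 2 * CS * Rpower 2 (r + 1) * Rpower 2 e').
  assert (HC4 : 0 < C4) by (unfold C4; pose proof (Rpower_pos 2 (r + 1)); pose proof (Rpower_pos 2 e'); apply Rmult_lt_0_compat; [apply Rmult_lt_0_compat|]; lra).
  exists (Rmin (c3 / Cv) c4), (K + C4).
  split; [apply Rmin_pos; [apply Rdiv_lt_0_compat|]; auto|]. split; [lra|].
  intros L HL. destruct (X_facts L ltac:(lra)) as [[Hx0 Hx1] [[HxL HxU] Hxi]].
  pose proof (exp_pos L) as HeL. assert (Hie : 0 < / exp L) by (apply Rinv_0_lt_compat; lra).
  set (V := Rpower L kk / exp L).
  assert (HLk : L * Rpower L e' = Rpower L kk) by (rewrite Rpower_mul_self by lra; f_equal; lra).
  assert (HV1 : / exp L <= V).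
  { unfold V, Rdiv. rewrite <- (Rmult_1_l (/ exp L)) at 1. apply Rmult_le_compat_r; [lra|].
    apply Rpower_ge1; [lra|]. rewrite Hkk; lra. }
  split.
  - intros m Hm. set (M := INR m). assert (HM : 1 <= M) by (apply INR_ge1; auto).
    unfold Fep. fold r.
    destruct (Rle_or_lt (Rpower (M + 1) (2 * p)) (L / 2)) as [Hc|Hc].
    + eapply Rle_trans; [|apply form_ge_T]. eapply Rle_trans; [|apply (Hsm L m); auto; lra].
      specialize (HPv L ltac:(lra)). replace (/ 4 * L) with (L / 4) in HPv by field.
      pose proof (Rmin_l (c3 / Cv) c4).
      assert (HVb : V <= Cv * (exp (L / 4) / exp L)).
      { unfold V, Rdiv. rewrite <- Rmult_assoc. apply Rmult_le_compat_r; lra. }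
      assert (0 <= V) by (unfold V; left; apply Rdiv_lt_0_compat; [apply Rpower_pos|lra]).
      apply Rle_trans with (c3 / Cv * V); [apply Rmult_le_compat_r; lra|].
      apply Rle_trans with (c3 / Cv * (Cv * (exp (L / 4) / exp L))).
      { apply Rmult_le_compat_l; [left; apply Rdiv_lt_0_compat; lra|auto]. }
      right. field. lra.
    + eapply Rle_trans; [|apply form_ge_xS, psum_pw_nonneg].
      specialize (Hlow m Hm). fold M in Hlow.
      set (P := Rpower (M + 1) (2 * p)) in *.
      assert (E1 : Rpower (M + 1) (r + 1) = Rpower P e') by (unfold P, e'; rewrite Rpower_mult; f_equal; field; lra).
      assert (QH1 : Rpower (L / 2) e' <= Rpower P e') by (apply Rpower_base_le; lra).
      unfold Rdiv in QH1. rewrite <- Rpower_mult_distr, Rpower_inv in QH1 by lra.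
      assert (QH2 : Rpower ((M + 1) * / 2) (r + 1) <= Rpower M (r + 1)) by (apply Rpower_base_le; lra).
      rewrite <- Rpower_mult_distr, Rpower_inv, E1 in QH2 by lra.
      pose proof (Rpower_pos L e'). pose proof (Rpower_pos 2 (- e')). pose proof (Rpower_pos 2 (- (r + 1))).
      pose proof (Rpower_pos P e').
      assert (QH3 : Rpower 2 (- (r + 1)) * Rpower 2 (- e') * Rpower L e' <= Rpower M (r + 1)).
      { eapply Rle_trans; [|apply QH2].
        replace (Rpower 2 (- (r + 1)) * Rpower 2 (- e') * Rpower L e') with (Rpower L e' * Rpower 2 (- e') * Rpower 2 (- (r + 1))) by ring.
        apply Rmult_le_compat_r; lra. }
      assert (QH4 : c4 * Rpower L e' <= psum (pw r) m).
      { eapply Rle_trans; [|apply Hlow]. unfold c4.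
        replace (cS * Rpower 2 (- (r + 1)) * Rpower 2 (- e') * Rpower L e') with (cS * (Rpower 2 (- (r + 1)) * Rpower 2 (- e') * Rpower L e')) by ring.
        apply Rmult_le_compat_l; lra. }
      pose proof (Rmin_r (c3 / Cv) c4).
      assert (HminV : Rmin (c3 / Cv) c4 * V <= c4 * V) by (apply Rmult_le_compat_r; [unfold V; left; apply Rdiv_lt_0_compat; [apply Rpower_pos|lra]|lra]).
      eapply Rle_trans; [apply HminV|].
      unfold V. rewrite <- HLk.
      apply Rle_trans with (L / exp L * (c4 * Rpower L e')); [right; field; lra|].
      assert (0 <= L / exp L) by (apply Rlt_le, Rdiv_lt_0_compat; lra).
      assert (0 <= c4 * Rpower L e') by (apply Rmult_le_pos; lra).
      apply Rmult_le_compat; lra.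
  - destruct (ep_m0 a p Hp ltac:(lra) L ltac:(lra)) as [m0 [Hm0 [HP0 [HM0 Hg0]]]].
    exists m0. split; auto. unfold Fep. fold r.
    apply form_le2 with (y := X L).
    + eapply Rle_trans; [apply (Htu m0 L); auto|].
      assert (K / exp L <= K * V) by (unfold Rdiv; apply Rmult_le_compat_l; lra).
      assert (0 <= C4 * V) by (apply Rmult_le_pos; lra). rewrite Rmult_plus_distr_r. lra.
    + apply psum_pw_nonneg.
    + lra.
    + lra.
    + specialize (Hup m0 Hm0). set (z := Rpower (2 * L) (/ (2 * p))) in *.
      assert (QH1 : Rpower (INR m0) (r + 1) <= Rpower (2 * z) (r + 1)) by (apply Rpower_base_le; [lra|apply INR_ge1 in Hm0; lra|lra]).
      rewrite <- Rpower_mult_distr in QH1 by (unfold z; try apply Rpower_pos; lra).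
      assert (E : Rpower z (r + 1) = Rpower 2 e' * Rpower L e').
      { unfold z. rewrite Rpower_mult. rewrite Rpower_mult_distr by lra. f_equal. unfold e'. field. lra. }
      rewrite E in QH1.
      pose proof (Rpower_pos 2 (r + 1)). pose proof (Rpower_pos 2 e'). pose proof (Rpower_pos L e').
      assert (HS : psum (pw r) m0 <= CS * Rpower 2 (r + 1) * Rpower 2 e' * Rpower L e').
      { eapply Rle_trans; [apply Hup|].
        replace (CS * Rpower 2 (r + 1) * Rpower 2 e' * Rpower L e') with (CS * (Rpower 2 (r + 1) * (Rpower 2 e' * Rpower L e'))) by ring.
        apply Rmult_le_compat_l; lra. }
      assert (X L * psum (pw r) m0 <= 2 * L / exp L * (CS * Rpower 2 (r + 1) * Rpower 2 e' * Rpower L e')).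
      { apply Rmult_le_compat; try lra. apply psum_pw_nonneg. }
      assert (2 * L / exp L * (CS * Rpower 2 (r + 1) * Rpower 2 e' * Rpower L e') = C4 * V).
      { unfold C4, V. rewrite <- HLk. field. lra. }
      assert (0 <= K * V) by (unfold V; apply Rmult_le_pos; [lra|left; apply Rdiv_lt_0_compat; [apply Rpower_pos|lra]]).
      nra.
Qed.

Lemma ln4_ge1 : 1 <= ln 4.
Proof. rewrite <- (ln_exp 1). apply ln_le_m; [apply exp_pos|]. pose proof exp_le_3. lra. Qed.

Lemma ep2_core p a s : 0 < p -> 1/2 < a -> s - a = 1/2 ->
  exists c C, 0 < c /\ 0 < C /\ forall L, 4 <= L ->
  (forall m, (1 <= m)%nat -> c * (L * ln L / exp L) <= Fep p a s (X L) m) /\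
  exists m0, (1 <= m0)%nat /\ Fep p a s (X L) m0 <= C * (L * ln L / exp L).
Proof.
  intros Hp Ha Hsa. assert (Hr : 2 * a - 2 * s = -1) by lra.
  destruct (ep_tail s p Hp) as [K [HK [_ Htu]]].
  destruct (ep_small s p Hp) as [c3 [Hc3 Hsm]].
  destruct (poly_exp 2 (/ 4) ltac:(lra)) as [Cv [HCv HPv]].
  assert (Hip : 0 < / p) by (apply Rinv_0_lt_compat; lra).
  exists (Rmin (c3 / Cv) (/ (4 * p))), (K + 2 * (2 + / p)).
  split; [apply Rmin_pos; [apply Rdiv_lt_0_compat|apply Rinv_0_lt_compat]; lra|]. split; [lra|].
  intros L HL. destruct (X_facts L ltac:(lra)) as [[Hx0 Hx1] [[HxL HxU] Hxi]].
  pose proof (exp_pos L) as HeL. assert (Hie : 0 < / exp L) by (apply Rinv_0_lt_compat; lra).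
  assert (HlnL : 1 <= ln L) by (pose proof ln4_ge1; assert (ln 4 <= ln L) by (apply ln_le_m; lra); lra).
  assert (HlnL2 : ln L <= L) by (pose proof (ln_le_sub1 L ltac:(lra)); lra).
  set (V := L * ln L / exp L).
  assert (HV1 : / exp L <= V).
  { unfold V, Rdiv. rewrite <- (Rmult_1_l (/ exp L)) at 1. apply Rmult_le_compat_r; nra. }
  assert (HV0 : 0 <= V) by lra.
  split.
  - intros m Hm. set (M := INR m). assert (HM : 1 <= M) by (apply INR_ge1; auto).
    unfold Fep. rewrite Hr.
    destruct (Rle_or_lt (Rpower (M + 1) (2 * p)) (L / 2)) as [Hc|Hc].
    + eapply Rle_trans; [|apply form_ge_T]. eapply Rle_trans; [|apply (Hsm L m); auto; lra].
      specialize (HPv L ltac:(lra)). replace (/ 4 * L) with (L / 4) in HPv by field.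
      replace 2 with (INR 2) in HPv at 1 by (simpl; ring). rewrite Rpower_pow in HPv by lra.
      pose proof (Rmin_l (c3 / Cv) (/ (4 * p))).
      assert (HVb : V <= Cv * (exp (L / 4) / exp L)).
      { unfold V, Rdiv. rewrite <- Rmult_assoc. apply Rmult_le_compat_r; [lra|]. simpl in HPv. nra. }
      apply Rle_trans with (c3 / Cv * V); [apply Rmult_le_compat_r; lra|].
      apply Rle_trans with (c3 / Cv * (Cv * (exp (L / 4) / exp L))).
      { apply Rmult_le_compat_l; [left; apply Rdiv_lt_0_compat; lra|auto]. }
      right. field. lra.
    + eapply Rle_trans; [|apply form_ge_xS, psum_pw_nonneg].
      pose proof (sum_log_low m Hm) as Hs1. fold M in Hs1.
      assert (Hln : ln (L / 2) < ln (Rpower (M + 1) (2 * p))) by (apply ln_increasing; lra).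
      rewrite ln_Rpower in Hln.
      assert (E2 : ln (L / 2) = ln L - ln 2) by (unfold Rdiv; rewrite ln_mult, ln_Rinv by lra; ring).
      assert (E4 : ln 4 = 2 * ln 2) by (replace 4 with (2 * 2) by ring; rewrite ln_mult by lra; ring).
      assert (ln 4 <= ln L) by (apply ln_le_m; lra).
      assert (HlnM : ln L / (4 * p) <= ln (M + 1)).
      { apply Rmult_le_reg_r with (4 * p); [lra|]. unfold Rdiv. rewrite Rmult_assoc, Rinv_l by lra. nra. }
      pose proof (Rmin_r (c3 / Cv) (/ (4 * p))).
      apply Rle_trans with (/ (4 * p) * V); [apply Rmult_le_compat_r; lra|].
      apply Rle_trans with (L / exp L * (ln L / (4 * p))); [right; unfold V; field; lra|].
      apply Rmult_le_compat; try lra; apply Rlt_le, Rdiv_lt_0_compat; lra.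
  - destruct (ep_m0 a p Hp ltac:(lra) L ltac:(lra)) as [m0 [Hm0 [HP0 [HM0 Hg0]]]].
    exists m0. split; auto. unfold Fep. rewrite Hr.
    apply form_le2 with (y := X L).
    + eapply Rle_trans; [apply (Htu m0 L); auto|].
      assert (K / exp L <= K * V) by (unfold Rdiv; apply Rmult_le_compat_l; lra).
      assert (0 <= 2 * (2 + / p) * V) by (apply Rmult_le_pos; lra). rewrite Rmult_plus_distr_r. lra.
    + apply psum_pw_nonneg.
    + lra.
    + lra.
    + pose proof (sum_log_up m0 Hm0) as HS.
      set (z := Rpower (2 * L) (/ (2 * p))) in *.
      assert (Hz : 0 < z) by apply Rpower_pos.
      assert (ln (INR m0) <= ln (2 * z)) by (apply ln_le_m; [apply INR_ge1 in Hm0; lra|lra]).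
      rewrite ln_mult in H by lra. unfold z in H. rewrite ln_Rpower, ln_mult in H by lra.
      pose proof ln2_le1.
      assert (ln 2 <= ln L) by (apply ln_le_m; lra).
      assert (/ (2 * p) * (ln 2 + ln L) <= / p * ln L).
      { replace (/ p * ln L) with (/ (2 * p) * (2 * ln L)) by (field; lra).
        apply Rmult_le_compat_l; [left; apply Rinv_0_lt_compat; lra|lra]. }
      assert (HS2 : psum (pw (-1)) m0 <= (2 + / p) * ln L) by nra.
      apply Rle_trans with (2 * L / exp L * ((2 + / p) * ln L)).
      { apply Rmult_le_compat; try lra. apply psum_pw_nonneg. }
      assert (2 * L / exp L * ((2 + / p) * ln L) = 2 * (2 + / p) * V) by (unfold V; field; lra).
      assert (0 <= K * V) by (apply Rmult_le_pos; lra). rewrite Rmult_plus_distr_r. lra.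
Qed.

Lemma ep3_core p a s : 0 < p -> 1/2 < a -> s - a > 1/2 ->
  exists c C, 0 < c /\ 0 < C /\ forall L, 4 <= L ->
  (forall m, (1 <= m)%nat -> c * (L / exp L) <= Fep p a s (X L) m) /\
  exists m0, (1 <= m0)%nat /\ Fep p a s (X L) m0 <= C * (L / exp L).
Proof.
  intros Hp Ha Hsa. set (r := 2 * a - 2 * s). assert (Hr : r < -1) by (unfold r; lra).
  destruct (ep_tail s p Hp) as [K [HK [_ Htu]]].
  set (CS := 1 + / (- r - 1)).
  assert (HCS : 0 < CS) by (unfold CS; assert (0 < / (- r - 1)) by (apply Rinv_0_lt_compat; lra); lra).
  exists 1, (K + 2 * CS). split; [lra|]. split; [lra|].
  intros L HL. destruct (X_facts L ltac:(lra)) as [[Hx0 Hx1] [[HxL HxU] Hxi]].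
  pose proof (exp_pos L) as HeL. assert (Hie : 0 < / exp L) by (apply Rinv_0_lt_compat; lra).
  set (V := L / exp L).
  assert (HV1 : / exp L <= V).
  { unfold V, Rdiv. rewrite <- (Rmult_1_l (/ exp L)) at 1. apply Rmult_le_compat_r; lra. }
  split.
  - intros m Hm. unfold Fep. fold r. eapply Rle_trans; [|apply form_ge_xS, psum_pw_nonneg].
    pose proof (psum_ge1 r m Hm). rewrite Rmult_1_l. unfold V. nra.
  - destruct (ep_m0 a p Hp ltac:(lra) L ltac:(lra)) as [m0 [Hm0 [HP0 [HM0 Hg0]]]].
    exists m0. split; auto. unfold Fep. fold r.
    apply form_le2 with (y := X L).
    + eapply Rle_trans; [apply (Htu m0 L); auto|].
      assert (K / exp L <= K * V) by (unfold Rdiv; apply Rmult_le_compat_l; lra).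
      assert (0 <= 2 * CS * V) by (apply Rmult_le_pos; lra). rewrite Rmult_plus_distr_r. lra.
    + apply psum_pw_nonneg.
    + lra.
    + lra.
    + pose proof (sum_neg_up r m0 Hr Hm0) as HS. fold CS in HS.
      apply Rle_trans with (2 * L / exp L * CS).
      { apply Rmult_le_compat; try lra. apply psum_pw_nonneg. }
      assert (2 * L / exp L * CS = 2 * CS * V) by (unfold V; field; lra).
      assert (0 <= K * V) by (apply Rmult_le_pos; lra). rewrite Rmult_plus_distr_r. lra.
Qed.


Lemma ep_part : forall (p a s : R) (l : nat -> R),
     0 < p -> 1/2 < a ->
     (forall j : nat, (1 <= j)%nat -> (l j) ^ 2 = Rpower (INR j) (- (2 * s))) ->
     let beta := fun j : nat => exp (Rpower (INR j) (2 * p) - 1) in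
     let gamma := fun j : nat => Rpower (INR j) (- (2 * a)) in
     (s - a < 1/2 ->
        asymp (Rstar_seq l beta gamma)
          (fun n => Rpower (ln (INR n)) ((2*p + 2*a - 2*s + 1) / (2*p)) / INR n)) /\
     (s - a = 1/2 ->
        asymp (Rstar_seq l beta gamma)
          (fun n => ln (INR n) * ln (ln (INR n)) / INR n)) /\
     (s - a > 1/2 ->
        asymp (Rstar_seq l beta gamma) (fun n => ln (INR n) / INR n)).
Proof.
  intros p a s l Hp Ha Hl beta gamma.
  assert (HRm : forall x m, (1 <= m)%nat -> Rm l beta gamma x m = Fep p a s x m).
  { intros x m Hm. unfold Fep. rewrite (Rm_eq l beta gamma x m (uep s p) (pw (2 * a - 2 * s))).
    - reflexivity.
    - intros j Hj. rewrite Hl by auto. reflexivity.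
    - intros j Hj. rewrite Hl by auto. unfold gamma, pw. rewrite Rpower_div by (apply INR_ge1 in Hj; lra).
      f_equal. ring. }
  destruct (eventually_ln 4) as [N [HN1 HN]].
  assert (Hgen : forall c C (V : R -> R) (W : nat -> R), 0 < c -> 0 < C ->
    (forall n, (1 <= n)%nat -> W n = V (ln (INR n))) ->
    (forall L, 4 <= L -> (forall m, (1 <= m)%nat -> c * V L <= Fep p a s (X L) m) /\
       exists m0, (1 <= m0)%nat /\ Fep p a s (X L) m0 <= C * V L) ->
    asymp (Rstar_seq l beta gamma) W).
  { intros c C V W Hc HC HW Hcore. exists c, C, N. split; [auto|]. split; [auto|].
    intros n Hn. specialize (HN n Hn).
    assert (Hn1 : (1 <= n)%nat) by lia. rewrite HW by auto.
    set (L := ln (INR n)) in *.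
    rewrite Rstar_seq_X by auto. fold L.
    destruct (X_facts L ltac:(lra)) as [[Hx0 Hx1] _].
    destruct (Hcore L HN) as [Hlo Hhi].
    apply (Rstar_sandwich l beta gamma (X L) (Fep p a s (X L))); auto.
    intros m Hm. apply Fep_nonneg; lra. }
  split; [|split].
  - intros Hsa. destruct (ep1_core p a s Hp Ha Hsa) as [c [C [Hc [HC Hcore]]]].
    apply (Hgen c C (fun L => Rpower L ((2*p + 2*a - 2*s + 1) / (2*p)) / exp L)); auto.
    intros n Hn. rewrite exp_ln_n; auto.
  - intros Hsa. destruct (ep2_core p a s Hp Ha Hsa) as [c [C [Hc [HC Hcore]]]].
    apply (Hgen c C (fun L => L * ln L / exp L)); auto.
    intros n Hn. rewrite exp_ln_n; auto.
  - intros Hsa. destruct (ep3_core p a s Hp Ha Hsa) as [c [C [Hc [HC Hcore]]]].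
    apply (Hgen c C (fun L => L / exp L)); auto.
    intros n Hn. rewrite exp_ln_n; auto.
Qed.


Theorem proposition3p5 :
  (* (pp) *)
  (forall (p a s : R) (l : nat -> R),
     0 < p -> 1/2 < a -> 3/2 <= p + a -> 1/2 - p < s ->
     (forall j : nat, (1 <= j)%nat -> (l j) ^ 2 = Rpower (INR j) (- (2 * s))) ->
     let beta := fun j : nat => Rpower (INR j) (2 * p) in
     let gamma := fun j : nat => Rpower (INR j) (- (2 * a)) in
     (s - a < 1/2 ->
        asymp (Rstar_seq l beta gamma)
          (fun n => Rpower (ln (INR n) / INR n) ((2*p + 2*s - 1) / (2*p + 2*a)))) /\
     (s - a = 1/2 ->
        asymp (Rstar_seq l beta gamma) (fun n => (ln (INR n)) ^ 2 / INR n)) /\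
     (s - a > 1/2 ->
        asymp (Rstar_seq l beta gamma) (fun n => ln (INR n) / INR n))) /\
  (* (pe) *)
  (forall (p a s : R) (l : nat -> R),
     0 < p -> 0 < a -> 1/2 - p < s ->
     (forall j : nat, (1 <= j)%nat -> (l j) ^ 2 = Rpower (INR j) (- (2 * s))) ->
     let beta := fun j : nat => Rpower (INR j) (2 * p) in
     let gamma := fun j : nat => exp (- Rpower (INR j) (2 * a) + 1) in
     asymp (Rstar_seq l beta gamma)
       (fun n => Rpower (ln (INR n)) (- ((2*p + 2*s - 1) / (2*a))))) /\
  (* (ep) *)
  (forall (p a s : R) (l : nat -> R),
     0 < p -> 1/2 < a ->
     (forall j : nat, (1 <= j)%nat -> (l j) ^ 2 = Rpower (INR j) (- (2 * s))) ->
     let beta := fun j : nat => exp (Rpower (INR j) (2 * p) - 1) in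
     let gamma := fun j : nat => Rpower (INR j) (- (2 * a)) in
     (s - a < 1/2 ->
        asymp (Rstar_seq l beta gamma)
          (fun n => Rpower (ln (INR n)) ((2*p + 2*a - 2*s + 1) / (2*p)) / INR n)) /\
     (s - a = 1/2 ->
        asymp (Rstar_seq l beta gamma)
          (fun n => ln (INR n) * ln (ln (INR n)) / INR n)) /\
     (s - a > 1/2 ->
        asymp (Rstar_seq l beta gamma) (fun n => ln (INR n) / INR n))).
Proof.
  split; [exact pp_part|split; [exact pe_part|exact ep_part]].
Qed.
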